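(* Let $\psi\in C([0,T];\mathbb{R})$ be an admissible curve and let $L:(0,\infty)\to(0,\infty)$ satisfy $\lim_{\sigma_0\to0}L(\sigma_0)=+\infty$. Then $$\lim_{\sigma_0\to0}\ \sup_{t\in[0,T],\ |x|\ge\sigma_0^2L(\sigma_0)+\psi_t}\big|\theta^{\sigma_0}(t,x)-\theta(t,x)\big|=0.$$
   Context: Fix $T>0$, $\kappa\in\mathbb{R}$, $\delta\in(0,T)$. Let $\eta$ solve $\eta_t'=\eta_t^2-2\kappa\eta_t-1$, $\eta_T=1$ on $[0,T]$; set $w_t=\exp(\int_t^T(\eta_s-\kappa)ds)$, $r_t=\int_t^Tw_s^{-2}ds$. Define $g(x)=-x/r_\delta$ if $|x|\le r_\delta$, $g(x)=-\mathrm{sign}(x)$ if $|x|>r_\delta$. For $\sigma_0\in(0,1)$, $\theta^{\sigma_0}$ denotes the unique bounded classical solution (in $C^{1,2}([0,T)\times\mathbb{R})\cap C([0,T]\times\mathbb{R})$) of $$\partial_t\theta-w_t^{-2}\theta\,\partial_x\theta+\tfrac12\sigma_0^2w_t^{-2}\partial^2_{xx}\theta=0\ \text{on }[0,T)\times\mathbb{R},\qquad \theta(T,\cdot)=g.$$ The entropy solution $\theta:[0,T]\times\mathbb{R}\to\mathbb{R}$ is defined by $\theta(t,x)=-\mathrm{sign}(x)$ if $t\le\delta$; $\theta(t,x)=-\mathrm{sign}(x)$ if $t\ge\delta$ and $|x|\ge r_\delta-r_t$; $\theta(t,x)=-x/(r_\delta-r_t)$ if $t>\delta$ and $|x|<r_\delta-r_t$.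 A curve $\psi\in C([0,T];\mathbb{R})$ is called admissible if it is non-negative, non-decreasing, and there is $a<\delta$ such that $\psi_t>(r_\delta-r_t)_+$ for all $t\in(a,T]$. *)

(* Defs.v *)
From Stdlib Require Import Reals Lra Classical ClassicalEpsilon.
Open Scope R_scope.

(* Riemann integral int_a^b f, total: value of RiemannInt when f is
   Riemann integrable on [a,b] (independent of the proof), 0 otherwise. *)
Definition RInt (f : R -> R) (a b : R) : R :=
  match excluded_middle_informative
          (exists v : R, exists pr : Riemann_integrable f a b, RiemannInt pr = v) with
  | left H => proj1_sig (constructive_indefinite_description _ H)
  | right _ => 0
  end.

Definition cont_on_interval (f : R -> R) (a b : R) : Prop :=
  forall t, a <= t <= b -> forall eps, 0 < eps -> exists d, 0 < d /\
    forall s, a <= s <= b -> Rabs (s - t) < d -> Rabs (f s - f t) < eps.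

Definition cont_on2 (f : R -> R -> R) (S : R -> R -> Prop) : Prop :=
  forall t x, S t x -> forall eps, 0 < eps -> exists d, 0 < d /\
    forall t' x', S t' x' -> Rabs (t' - t) < d -> Rabs (x' - x) < d ->
      Rabs (f t' x' - f t x) < eps.

Definition is_eta (T kappa : R) (eta : R -> R) : Prop :=
  cont_on_interval eta 0 T /\
  (forall t, 0 < t < T ->
     derivable_pt_lim eta t (eta t ^ 2 - 2 * kappa * eta t - 1)) /\
  eta T = 1.

Definition w_fun (T kappa : R) (eta : R -> R) (t : R) : R :=
  exp (RInt (fun s => eta s - kappa) t T).

Definition r_fun (T kappa : R) (eta : R -> R) (t : R) : R :=
  RInt (fun s => / (w_fun T kappa eta s) ^ 2) t T.

Definition g_fun (T kappa delta : R) (eta : R -> R) (x : R) : R :=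
  let rd := r_fun T kappa eta delta in
  if Rle_dec (Rabs x) rd then - x / rd
  else (if Rlt_dec 0 x then -1 else 1).

Definition msign (x : R) : R :=
  if Rlt_dec 0 x then -1 else if Rlt_dec x 0 then 1 else 0.

Definition theta_entropy (T kappa delta : R) (eta : R -> R) (t x : R) : R :=
  let r := r_fun T kappa eta in
  if Rle_dec t delta then msign x
  else if Rle_dec (r delta - r t) (Rabs x) then msign x
  else - x / (r delta - r t).

Definition is_bounded_classical_solution (T kappa delta : R) (eta : R -> R)
    (s0 : R) (th : R -> R -> R) : Prop :=
  let w := w_fun T kappa eta in
  (exists M, forall t x, 0 <= t <= T -> Rabs (th t x) <= M) /\
  cont_on2 th (fun t _ => 0 <= t <= T) /\
  (exists dt dx dxx : R -> R -> R,
     cont_on2 dt (fun t _ => 0 <= t < T) /\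
     cont_on2 dx (fun t _ => 0 <= t < T) /\
     cont_on2 dxx (fun t _ => 0 <= t < T) /\
     (forall t x, 0 < t < T -> derivable_pt_lim (fun s => th s x) t (dt t x)) /\
     (forall t x, 0 <= t < T -> derivable_pt_lim (fun y => th t y) x (dx t x)) /\
     (forall t x, 0 <= t < T -> derivable_pt_lim (fun y => dx t y) x (dxx t x)) /\
     (forall t x, 0 <= t < T ->
        dt t x - / (w t) ^ 2 * th t x * dx t x
          + / 2 * s0 ^ 2 * / (w t) ^ 2 * dxx t x = 0)) /\
  (forall x, th T x = g_fun T kappa delta eta x).

Definition admissible (T kappa delta : R) (eta : R -> R) (psi : R -> R) : Prop :=
  let r := r_fun T kappa eta in
  cont_on_interval psi 0 T /\
  (forall t, 0 <= t <= T -> 0 <= psi t) /\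
  (forall s t, 0 <= s <= t -> t <= T -> psi s <= psi t) /\
  (exists a, a < delta /\
     forall t, 0 <= t -> a < t <= T -> psi t > Rmax (r delta - r t) 0).

(* Main.v *)
Require Import Defs.
From Stdlib Require Import Reals.
From Stdlib Require Import Lra Lia ZArith Classical ClassicalEpsilon FunctionalExtensionality List.
From Coquelicot Require Import Coquelicot.
Open Scope R_scope.

Definition clamp (a b t : R) : R := Rmax a (Rmin b t).

Lemma clamp_in a b t : a <= b -> a <= clamp a b t <= b.
Proof. intros; unfold clamp, Rmax, Rmin; repeat destruct Rle_dec; lra. Qed.

Lemma clamp_id a b t : a <= t <= b -> clamp a b t = t.
Proof. intros; unfold clamp, Rmax, Rmin; repeat destruct Rle_dec; lra. Qed.

Lemma clamp_lip a b t t' : a <= b -> Rabs (clamp a b t - clamp a b t') <= Rabs (t - t').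
Proof. intros; unfold clamp, Rmax, Rmin; repeat destruct Rle_dec;
  unfold Rabs; repeat destruct Rcase_abs; lra. Qed.

Lemma cont2_pt_1 f t x : continuity_2d_pt f t x -> continuity_pt (f t) x.
Proof.
  intros H eps Heps. destruct (H (mkposreal _ Heps)) as [d Hd].
  exists d; split; [apply cond_pos|]. intros y [_ Hy].
  unfold R_dist, dist in *; simpl in *. apply Hd.
  rewrite Rminus_eq_0, Rabs_R0; apply cond_pos. exact Hy.
Qed.

Lemma cont2_pt_2 f t x : continuity_2d_pt f t x -> continuity_pt (fun s => f s x) t.
Proof.
  intros H eps Heps. destruct (H (mkposreal _ Heps)) as [d Hd].
  exists d; split; [apply cond_pos|]. intros y [_ Hy].
  unfold R_dist, dist in *; simpl in *. apply Hd. exact Hy.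
  rewrite Rminus_eq_0, Rabs_R0; apply cond_pos.
Qed.

Lemma unif_cont2 f a b c d :
  (forall t x, continuity_2d_pt f t x) ->
  forall eps, 0 < eps -> exists del, 0 < del /\
   forall t x t' x', a <= t <= b -> c <= x <= d ->
     Rabs (t' - t) < del -> Rabs (x' - x) < del -> Rabs (f t' x' - f t x) < eps.
Proof.
  intros Hc eps Heps.
  assert (Hg : forall u v, exists del : posreal, forall u' v', Rabs (u' - u) < 2*del ->
     Rabs (v' - v) < 2*del -> Rabs (f u' v' - f u v) < eps/2).
  { intros u v. assert (He2 : 0 < eps/2) by lra.
    destruct (Hc u v (mkposreal _ He2)) as [del Hd].
    assert (Hp : 0 < del/2) by (destruct del; simpl; lra).
    exists (mkposreal _ Hp). simpl. intros u' v' H1 H2. apply Hd; lra. }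
  set (gauge := fun u v => proj1_sig (constructive_indefinite_description _ (Hg u v))).
  assert (Hgauge : forall u v u' v', Rabs (u' - u) < 2*gauge u v ->
     Rabs (v' - v) < 2*gauge u v -> Rabs (f u' v' - f u v) < eps/2).
  { intros u v. unfold gauge. destruct constructive_indefinite_description as [g Hgg]; simpl. exact Hgg. }
  destruct (compactness_value_2d a b c d gauge) as [del Hdel].
  exists del; split; [apply cond_pos|].
  intros t x t' x' Ht Hx H1 H2.
  apply NNPP; intro Hn. apply (Hdel t x Ht Hx). intros [u [v [Hu [Hv [Htu [Hxv Hdg]]]]]].
  apply Hn. assert (Hgp : 0 < gauge u v) by apply cond_pos.
  assert (A1 : Rabs (f t x - f u v) < eps/2).
  { apply Hgauge; lra. }
  assert (A2 : Rabs (f t' x' - f u v) < eps/2).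
  { apply Hgauge.
    - replace (t' - u) with ((t' - t) + (t - u)) by ring.
      eapply Rle_lt_trans; [apply Rabs_triang|]. lra.
    - replace (x' - v) with ((x' - x) + (x - v)) by ring.
      eapply Rle_lt_trans; [apply Rabs_triang|]. lra. }
  replace (f t' x' - f t x) with ((f t' x' - f u v) - (f t x - f u v)) by ring.
  eapply Rle_lt_trans; [apply Rabs_triang|]. rewrite Rabs_Ropp. lra.
Qed.

Lemma EVT2 f a b c d : a <= b -> c <= d ->
  (forall t x, continuity_2d_pt f t x) ->
  exists t0 x0, a <= t0 <= b /\ c <= x0 <= d /\
    forall t x, a <= t <= b -> c <= x <= d -> f t x <= f t0 x0.
Proof.
  intros Hab Hcd Hc.
  assert (Hm : forall t, exists xm, c <= xm <= d /\ forall x, c <= x <= d -> f t x <= f t xm).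
  { intros t. destruct (continuity_ab_maj (f t) c d Hcd) as [xm [H1 H2]].
    intros; apply cont2_pt_1; auto. exists xm; split; auto. }
  set (xm := fun t => proj1_sig (constructive_indefinite_description _ (Hm t))).
  assert (Hxm : forall t, c <= xm t <= d /\ forall x, c <= x <= d -> f t x <= f t (xm t)).
  { intros t; unfold xm; destruct constructive_indefinite_description; simpl; auto. }
  set (m := fun t => f t (xm t)).
  assert (Hmc : forall t, a <= t <= b -> continuity_pt m t).
  { intros t Ht eps Heps.
    destruct (unif_cont2 f a b c d Hc eps Heps) as [del [Hdel Hu]].
    exists del; split; auto. intros t' [_ Ht'].
    unfold R_dist, dist in *; simpl in *. unfold m.
    destruct (Hxm t) as [Ht1 Ht2]. destruct (Hxm t') as [Ht'1 Ht'2].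
    assert (B1 := Hu t (xm t) t' (xm t) Ht Ht1 Ht').
    assert (B2 := Hu t (xm t') t' (xm t') Ht Ht'1 Ht').
    rewrite Rminus_eq_0, Rabs_R0 in B1, B2.
    specialize (B1 Hdel). specialize (B2 Hdel).
    specialize (Ht2 (xm t') Ht'1). specialize (Ht'2 (xm t) Ht1).
    apply Rabs_def2 in B1. apply Rabs_def2 in B2.
    apply Rabs_def1; lra. }
  destruct (continuity_ab_maj m a b Hab Hmc) as [t0 [H1 H2]].
  exists t0, (xm t0). destruct (Hxm t0) as [H3 H4].
  repeat split; try lra.
  intros t x Ht Hx. apply Rle_trans with (m t). unfold m. apply (proj2 (Hxm t)); auto.
  apply H1; auto.
Qed.

Lemma rmin_half d h : 0 < d -> 0 < h -> 0 < Rmin (d/2) (h/2) /\ Rmin (d/2) (h/2) < d /\ Rmin (d/2) (h/2) < h.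
Proof. intros; unfold Rmin; destruct Rle_dec; lra. Qed.

Lemma deriv_locmax_0 f x0 l h : 0 < h -> derivable_pt_lim f x0 l ->
  (forall y, Rabs (y - x0) < h -> f y <= f x0) -> l = 0.
Proof.
  intros Hh Hd Hm.
  destruct (Rtotal_order l 0) as [Hl|[Hl|Hl]]; auto; exfalso.
  - destruct (Hd (-l/2)) as [del Hdel]; [lra|].
    destruct (rmin_half del h (cond_pos del) Hh) as [K1 [K2 K3]].
    set (k := - Rmin (del/2) (h/2)) in *.
    assert (Hk : k < 0) by (unfold k; lra).
    assert (Hk2 : Rabs k < del) by (unfold k; rewrite Rabs_Ropp, Rabs_pos_eq; lra).
    specialize (Hdel k (Rlt_not_eq _ _ Hk) Hk2).
    assert (Hf := Hm (x0 + k)). replace (x0 + k - x0) with k in Hf by ring.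
    assert (Rabs k < h) by (unfold k; rewrite Rabs_Ropp, Rabs_pos_eq; lra).
    specialize (Hf H).
    apply Rabs_def2 in Hdel. destruct Hdel as [Hdel _].
    assert ((f (x0 + k) - f x0) / k >= 0).
    { unfold Rdiv. replace ((f (x0 + k) - f x0) * / k) with ((f x0 - f (x0+k)) * / (-k)) by (field; lra).
      apply Rle_ge, Rmult_le_pos; [lra|]. left; apply Rinv_0_lt_compat; lra. }
    lra.
  - destruct (Hd (l/2)) as [del Hdel]; [lra|].
    destruct (rmin_half del h (cond_pos del) Hh) as [K1 [K2 K3]].
    set (k := Rmin (del/2) (h/2)) in *.
    assert (Hk2 : Rabs k < del) by (rewrite Rabs_pos_eq; lra).
    specialize (Hdel k (Rgt_not_eq _ _ K1) Hk2).
    assert (Hf := Hm (x0 + k)). replace (x0 + k - x0) with k in Hf by ring.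
    assert (Rabs k < h) by (rewrite Rabs_pos_eq; lra).
    specialize (Hf H).
    apply Rabs_def2 in Hdel. destruct Hdel as [_ Hdel].
    assert ((f (x0 + k) - f x0) / k <= 0).
    { unfold Rdiv. apply Rmult_le_0_r; [lra|]. left; apply Rinv_0_lt_compat; lra. }
    lra.
Qed.

Lemma deriv_rmax f t0 l h : 0 < h -> derivable_pt_lim f t0 l ->
  (forall t, t0 <= t < t0 + h -> f t <= f t0) -> l <= 0.
Proof.
  intros Hh Hd Hm. destruct (Rle_dec l 0) as [|Hl]; auto; exfalso.
  destruct (Hd (l/2)) as [del Hdel]; [lra|].
  destruct (rmin_half del h (cond_pos del) Hh) as [K1 [K2 K3]].
  set (k := Rmin (del/2) (h/2)) in *.
  assert (Hk2 : Rabs k < del) by (rewrite Rabs_pos_eq; lra).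
  specialize (Hdel k (Rgt_not_eq _ _ K1) Hk2).
  assert (Hf := Hm (t0 + k)).
  specialize (Hf ltac:(lra)).
  apply Rabs_def2 in Hdel. destruct Hdel as [_ Hdel].
  assert ((f (t0 + k) - f t0) / k <= 0).
  { unfold Rdiv. apply Rmult_le_0_r; [lra|]. left; apply Rinv_0_lt_compat; lra. }
  lra.
Qed.

Lemma deriv2_locmax f f' x0 c h : 0 < h ->
  (forall y, Rabs (y - x0) < h -> derivable_pt_lim f y (f' y)) ->
  derivable_pt_lim f' x0 c ->
  (forall y, Rabs (y - x0) < h -> f y <= f x0) -> c <= 0.
Proof.
  intros Hh Hd Hd2 Hm.
  assert (H0 : f' x0 = 0).
  { apply (deriv_locmax_0 f x0 _ h Hh); auto. apply Hd. rewrite Rminus_eq_0, Rabs_R0; lra. }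
  destruct (Rle_dec c 0) as [|Hc]; auto; exfalso.
  destruct (Hd2 (c/2)) as [del Hdel]; [lra|].
  destruct (rmin_half del h (cond_pos del) Hh) as [Hk [Hkd Hkh]].
  set (k := Rmin (del/2) (h/2)) in *.
  assert (Hpos : forall z, 0 < z <= k -> 0 < f' (x0 + z)).
  { intros z Hz. assert (Hz2 : Rabs z < del) by (rewrite Rabs_pos_eq; lra).
    specialize (Hdel z (Rgt_not_eq _ _ (proj1 Hz)) Hz2).
    rewrite H0, Rminus_0_r in Hdel. apply Rabs_def2 in Hdel. destruct Hdel as [_ Hdel].
    assert (c / 2 < f' (x0 + z) / z) by lra.
    apply Rmult_lt_reg_r with (/ z). apply Rinv_0_lt_compat; lra.
    rewrite Rmult_0_l. unfold Rdiv in H. lra. }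
  destruct (MVT_cor2 f f' x0 (x0 + k)) as [z [Hz1 Hz2]]; [lra| |].
  { intros z Hz. apply Hd. rewrite Rabs_pos_eq; lra. }
  assert (f (x0 + k) <= f x0) by (apply Hm; replace (x0 + k - x0) with k by ring; rewrite Rabs_pos_eq; lra).
  assert (0 < f' z) by (replace z with (x0 + (z - x0)) by ring; apply Hpos; lra).
  assert (0 < f' z * (x0 + k - x0)) by (apply Rmult_lt_0_compat; lra).
  lra.
Qed.

Lemma cont2_lip f fx K :
  (forall t x, derivable_pt_lim (f t) x (fx t x)) ->
  (forall t x, Rabs (fx t x) <= K) ->
  (forall t x, continuity_pt (fun s => f s x) t) ->
  forall t x, continuity_2d_pt f t x.
Proof.
  intros Hd Hb Hc t x eps.
  assert (HK : 0 <= K) by (eapply Rle_trans; [apply Rabs_pos|apply (Hb t x)]).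
  assert (He2 : 0 < eps/2) by (destruct eps; simpl; lra).
  destruct (Hc t x (eps/2) He2) as [d1 [Hd1 H1]].
  set (d2 := eps / (2 * (K + 1))).
  assert (Hd2 : 0 < d2) by (unfold d2; destruct eps; simpl; apply Rdiv_lt_0_compat; lra).
  assert (Hmin : 0 < Rmin d1 d2) by (apply Rmin_pos; auto).
  exists (mkposreal _ Hmin). intros u v Hu Hv. simpl in Hu, Hv.
  assert (Lip : Rabs (f u v - f u x) <= K * Rabs (v - x)).
  { destruct (Rtotal_order x v) as [Hxv|[Hxv|Hxv]].
    - destruct (MVT_cor2 (f u) (fx u) x v Hxv) as [z [Hz _]]. intros; apply Hd.
      rewrite Hz, Rabs_mult. apply Rmult_le_compat_r; [apply Rabs_pos|apply Hb].
    - subst; rewrite !Rminus_eq_0, Rabs_R0; lra.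
    - destruct (MVT_cor2 (f u) (fx u) v x Hxv) as [z [Hz _]]. intros; apply Hd.
      rewrite <- Rabs_Ropp. replace (- (f u v - f u x)) with (f u x - f u v) by ring.
      rewrite Hz, Rabs_mult, <- (Rabs_Ropp (v - x)).
      replace (- (v - x)) with (x - v) by ring.
      apply Rmult_le_compat_r; [apply Rabs_pos|apply Hb]. }
  assert (T2 : Rabs (f u x - f t x) < eps/2).
  { destruct (Req_dec u t) as [->|Hne].
    - rewrite Rminus_eq_0, Rabs_R0; lra.
    - apply H1. split. split; [exact I|auto]. unfold R_dist, dist; simpl.
      eapply Rlt_le_trans; [apply Hu|apply Rmin_l]. }
  assert (T1 : K * Rabs (v - x) <= eps / 2).
  { assert (Rabs (v - x) <= d2) by (left; eapply Rlt_le_trans; [apply Hv|apply Rmin_r]).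
    apply Rle_trans with (K * d2). apply Rmult_le_compat_l; auto.
    unfold d2. destruct eps as [e He]; simpl in *.
    apply Rmult_le_reg_r with (2 * (K+1)). lra.
    replace (K * (e / (2 * (K + 1))) * (2 * (K + 1))) with (K * e) by (field; lra).
    replace (e / 2 * (2 * (K + 1))) with (K * e + e) by field. nra. }
  replace (f u v - f t x) with ((f u v - f u x) + (f u x - f t x)) by ring.
  eapply Rle_lt_trans; [apply Rabs_triang|]. destruct eps; simpl in *; lra.
Qed.

Lemma D_ext f g x l : (forall y, f y = g y) -> derivable_pt_lim f x l -> derivable_pt_lim g x l.
Proof. intros He H. replace g with f; auto. apply functional_extensionality; auto. Qed.
Lemma D_val f x l l' : l = l' -> derivable_pt_lim f x l -> derivable_pt_lim f x l'.
Proof. intros ->; auto. Qed.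
Lemma D_plus f g x a b : derivable_pt_lim f x a -> derivable_pt_lim g x b ->
  derivable_pt_lim (fun y => f y + g y) x (a + b).
Proof. intros; exact (derivable_pt_lim_plus f g x a b H H0). Qed.
Lemma D_minus f g x a b : derivable_pt_lim f x a -> derivable_pt_lim g x b ->
  derivable_pt_lim (fun y => f y - g y) x (a - b).
Proof. intros; exact (derivable_pt_lim_minus f g x a b H H0). Qed.
Lemma D_mult f g x a b : derivable_pt_lim f x a -> derivable_pt_lim g x b ->
  derivable_pt_lim (fun y => f y * g y) x (a * g x + f x * b).
Proof. intros; exact (derivable_pt_lim_mult f g x a b H H0). Qed.
Lemma D_const c x : derivable_pt_lim (fun _ => c) x 0.
Proof. exact (derivable_pt_lim_const c x). Qed.
Lemma D_id x : derivable_pt_lim (fun y => y) x 1.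
Proof. exact (derivable_pt_lim_id x). Qed.
Lemma D_scal c f x a : derivable_pt_lim f x a -> derivable_pt_lim (fun y => c * f y) x (c * a).
Proof. intros. apply (D_val _ _ (0 * f x + c * a)); [ring|]. apply D_mult; auto. apply D_const. Qed.
Lemma D_opp f x a : derivable_pt_lim f x a -> derivable_pt_lim (fun y => - f y) x (- a).
Proof. intros. apply (D_ext (fun y => (-1) * f y)). intros; ring. apply (D_val _ _ (-1 * a)); [ring|]. apply D_scal; auto. Qed.
Lemma D_exp f x a : derivable_pt_lim f x a -> derivable_pt_lim (fun y => exp (f y)) x (a * exp (f x)).
Proof. intros. apply (D_val _ _ (exp (f x) * a)); [ring|].
  exact (derivable_pt_lim_comp f exp x a (exp (f x)) H (derivable_pt_lim_exp (f x))). Qed.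
Lemma D_inv f x a : f x <> 0 -> derivable_pt_lim f x a -> derivable_pt_lim (fun y => / f y) x (- a / (f x)^2).
Proof. intros Hf H.
  assert (H1 := derivable_pt_lim_div (fun _ => 1) f x 0 a (derivable_pt_lim_const 1 x) H Hf).
  apply (D_ext (fun y => 1 / f y)). intros; unfold Rdiv; ring.
  eapply D_val; [|exact H1]. unfold Rsqr. field; auto. Qed.
Lemma D_div f g x a b : g x <> 0 -> derivable_pt_lim f x a -> derivable_pt_lim g x b ->
  derivable_pt_lim (fun y => f y / g y) x ((a * g x - f x * b) / (g x)^2).
Proof. intros Hg H1 H2. eapply D_val; [|exact (derivable_pt_lim_div f g x a b H1 H2 Hg)]. unfold Rsqr. field; auto. Qed.
Lemma D_sq f x a : derivable_pt_lim f x a -> derivable_pt_lim (fun y => (f y)^2) x (2 * a * f x).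
Proof. intros. apply (D_ext (fun y => f y * f y)). intros; ring.
  eapply D_val; [|apply D_mult; eauto]. ring. Qed.
Lemma D_lin c d x : derivable_pt_lim (fun y => c * y + d) x c.
Proof. eapply D_val; [|apply D_plus; [apply D_scal; apply D_id|apply D_const]]. ring. Qed.
Lemma Rabs_le_inv a b : Rabs a <= b -> - b <= a <= b.
Proof. unfold Rabs; destruct Rcase_abs; lra. Qed.
Lemma two_abs_le x : 2 * Rabs x <= 1 + x ^ 2.
Proof. assert (0 <= (x - 1)^2) by apply pow2_ge_0. assert (0 <= (x + 1)^2) by apply pow2_ge_0.
  unfold Rabs; destruct Rcase_abs; nra. Qed.
Lemma C_minus f g x : continuity_pt f x -> continuity_pt g x -> continuity_pt (fun y => f y - g y) x.
Proof. intros; exact (continuity_pt_minus f g x H H0). Qed.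
Lemma C_plus f g x : continuity_pt f x -> continuity_pt g x -> continuity_pt (fun y => f y + g y) x.
Proof. intros; exact (continuity_pt_plus f g x H H0). Qed.
Lemma C_mult f g x : continuity_pt f x -> continuity_pt g x -> continuity_pt (fun y => f y * g y) x.
Proof. intros; exact (continuity_pt_mult f g x H H0). Qed.
Lemma C_scal c f x : continuity_pt f x -> continuity_pt (fun y => c * f y) x.
Proof. intros; exact (continuity_pt_scal f c x H). Qed.
Lemma C_const c x : continuity_pt (fun _ => c) x.
Proof. apply continuity_pt_const. intros ??; auto. Qed.
Lemma C_of_D f x l : derivable_pt_lim f x l -> continuity_pt f x.
Proof. intros H. apply derivable_continuous_pt. exists l. exact H. Qed.
Lemma C_ext f g x : (forall y, f y = g y) -> continuity_pt f x -> continuity_pt g x.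
Proof. intros He H. replace g with f; auto. apply functional_extensionality; auto. Qed.
Lemma nat_floor z : 0 <= z -> exists k : nat, INR k <= z < INR k + 1.
Proof.
  intros Hz. destruct (archimed z) as [H1 H2].
  assert (Hu : (1 <= up z)%Z).
  { apply le_IZR. assert (IZR (up z) > 0) by lra. apply lt_IZR in H. simpl. apply IZR_le. lia. }
  exists (Z.to_nat (up z - 1)).
  rewrite INR_IZR_INZ, Z2Nat.id by lia. rewrite minus_IZR. simpl. lra.
Qed.

Section Cmp.
Variables (T A B K s2 : R) (a : R -> R) (th Phi dt dx dxx Pt Px Pxx : R -> R -> R).
Hypothesis HT : 0 < T.
Hypothesis Hs2 : 0 <= s2 <= 1.
Hypothesis HK : 0 <= K.
Hypothesis Ha : forall t, 0 <= t <= T -> 0 < a t <= A.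
Hypothesis Hth : forall t x, 0 <= t <= T -> Rabs (th t x) <= B.
Hypothesis HPhi : forall t x, 0 <= t <= T -> Rabs (Phi t x) <= B.
Hypothesis Hcth : forall t x, continuity_2d_pt (fun t x => th (clamp 0 T t) x) t x.
Hypothesis HcPhi : forall t x, continuity_2d_pt (fun t x => Phi (clamp 0 T t) x) t x.
Hypothesis Hdt : forall t x, 0 < t < T -> derivable_pt_lim (fun s => th s x) t (dt t x).
Hypothesis Hdx : forall t x, 0 < t < T -> derivable_pt_lim (fun y => th t y) x (dx t x).
Hypothesis Hdxx : forall t x, 0 < t < T -> derivable_pt_lim (fun y => dx t y) x (dxx t x).
Hypothesis Hpde : forall t x, 0 < t < T ->
  dt t x - a t * th t x * dx t x + / 2 * s2 * a t * dxx t x = 0.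
Hypothesis HPt : forall t x, 0 < t < T -> derivable_pt_lim (fun s => Phi s x) t (Pt t x).
Hypothesis HPx : forall t x, 0 < t < T -> derivable_pt_lim (fun y => Phi t y) x (Px t x).
Hypothesis HPxx : forall t x, 0 < t < T -> derivable_pt_lim (fun y => Px t y) x (Pxx t x).
Hypothesis Hsuper : forall t x, 0 < t < T ->
  Pt t x - a t * Phi t x * Px t x + / 2 * s2 * a t * Pxx t x <= 0.
Hypothesis HPxK : forall t x, 0 < t < T -> - K <= Px t x.

Lemma A_pos : 0 < A.
Proof. destruct (Ha 0) as [H1 H2]; lra. Qed.
Lemma B_nonneg : 0 <= B.
Proof. eapply Rle_trans; [apply Rabs_pos|apply (Hth 0 0)]; lra. Qed.

Definition lam := A * K + 1.
Definition mu := A * (B + 1).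

Definition VV (eps : R) (t x : R) :=
  exp (lam * t) * (th t x - Phi t x) - eps * exp (- mu * t) * (1 + x ^ 2).

Lemma core_contra eps t0 x0 h : 0 < eps -> 0 < h -> 0 < t0 < T ->
  (forall t, t0 <= t < t0 + h -> VV eps t x0 <= VV eps t0 x0) ->
  (forall y, Rabs (y - x0) < h -> VV eps t0 y <= VV eps t0 x0) ->
  0 < VV eps t0 x0 -> False.
Proof.
  intros Heps Hh Ht0 Hmt Hmx Hpos.
  set (E := exp (lam * t0)). set (F := eps * exp (- mu * t0)).
  assert (HE : 0 < E) by apply exp_pos.
  assert (HF : 0 < F) by (apply Rmult_lt_0_compat; [auto|apply exp_pos]).
  assert (Dt : derivable_pt_lim (fun t => VV eps t x0) t0
     (lam * E * (th t0 x0 - Phi t0 x0) + E * (dt t0 x0 - Pt t0 x0) + mu * F * (1 + x0 ^ 2))).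
  { unfold VV. eapply D_val; [|apply D_minus; [apply D_mult|apply D_mult]].
    4: apply D_scal; apply D_exp; apply D_scal; apply D_id.
    3: apply D_minus; [apply Hdt|apply HPt]; auto.
    2: apply D_exp; apply D_scal; apply D_id.
    2: apply D_const.
    unfold E, F. ring. }
  assert (Dx : forall y, derivable_pt_lim (fun y => VV eps t0 y) y
     (E * (dx t0 y - Px t0 y) - F * (2 * y))).
  { intros y. unfold VV. eapply D_val; [|apply D_minus; [apply D_scal|apply D_scal]].
    3: apply D_plus; [apply D_const|apply (D_ext (fun y => y * y)); [intros; ring|apply D_mult; apply D_id]].
    2: apply D_minus; [apply Hdx|apply HPx]; auto.
    unfold E, F. ring. }
  assert (Dxx : derivable_pt_lim (fun y => E * (dx t0 y - Px t0 y) - F * (2 * y)) x0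
     (E * (dxx t0 x0 - Pxx t0 x0) - F * 2)).
  { eapply D_val; [|apply D_minus; [apply D_scal; apply D_minus; [apply Hdxx|apply HPxx]; auto|apply D_scal; apply D_scal; apply D_id]].
    ring. }
  assert (L1 := deriv_rmax _ _ _ h Hh Dt Hmt).
  assert (L2 := deriv_locmax_0 _ _ _ h Hh (Dx x0) Hmx).
  assert (L3 := deriv2_locmax _ _ _ _ h Hh (fun y _ => Dx y) Dxx Hmx).
  assert (Hpde0 := Hpde t0 x0 Ht0). assert (Hsup0 := Hsuper t0 x0 Ht0).
  assert (HPx0 := HPxK t0 x0 Ht0).
  assert (Ha0 : 0 < a t0 <= A) by (apply Ha; lra).
  assert (Hth0 := Hth t0 x0 ltac:(lra)). apply Rabs_le_inv in Hth0.
  assert (HB := B_nonneg).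
  unfold VV in Hpos. fold E in Hpos. fold F in Hpos.
  set (v := th t0 x0 - Phi t0 x0) in *.
  assert (HEv : F * (1 + x0^2) < E * v) by lra.
  assert (K1 : E * (dt t0 x0 - Pt t0 x0) >=
     a t0 * (th t0 x0 * (E * (dx t0 x0 - Px t0 x0)) + E * v * Px t0 x0)
     - / 2 * s2 * a t0 * (E * (dxx t0 x0 - Pxx t0 x0))).
  { assert (K0 : dt t0 x0 - Pt t0 x0 >= a t0 * (th t0 x0 * (dx t0 x0 - Px t0 x0) + v * Px t0 x0)
       - / 2 * s2 * a t0 * (dxx t0 x0 - Pxx t0 x0)) by (unfold v; lra).
    apply Rle_ge. apply Rge_le in K0.
    apply Rmult_le_compat_l with (r := E) in K0; [|lra].
    eapply Rle_trans; [|exact K0]. right; ring. }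
  assert (K2 : E * (dx t0 x0 - Px t0 x0) = F * (2 * x0)) by lra.
  assert (K3 : E * (dxx t0 x0 - Pxx t0 x0) <= F * 2) by lra.
  rewrite K2 in K1.
  assert (K4 : / 2 * s2 * a t0 * (E * (dxx t0 x0 - Pxx t0 x0)) <= A * F).
  { apply Rle_trans with (/2 * s2 * a t0 * (F * 2)).
    apply Rmult_le_compat_l; [|auto]. apply Rmult_le_pos; [|lra]. apply Rmult_le_pos; lra.
    replace (/ 2 * s2 * a t0 * (F * 2)) with (s2 * a t0 * F) by field.
    apply Rle_trans with (1 * A * F); [|lra]. apply Rmult_le_compat_r; [lra|].
    apply Rmult_le_compat; lra. }
  assert (K5 : a t0 * (E * v * Px t0 x0) >= - A * K * (E * v)).
  { assert (0 < E * v) by nra.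
    assert (E * v * Px t0 x0 >= - K * (E * v)) by nra.
    assert (a t0 * (E * v * Px t0 x0) >= a t0 * (- K * (E * v))) by nra.
    assert (a t0 * (K * (E * v)) <= A * (K * (E * v))).
    { apply Rmult_le_compat_r; [|lra]. apply Rmult_le_pos; lra. }
    lra. }
  assert (K6 : a t0 * (th t0 x0 * (F * (2 * x0))) >= - A * B * F * (1 + x0^2)).
  { assert (Hx : Rabs (th t0 x0 * (2 * x0)) <= B * (1 + x0 ^ 2)).
    { rewrite Rabs_mult. apply Rle_trans with (B * Rabs (2 * x0)).
      apply Rmult_le_compat_r. apply Rabs_pos. apply Rabs_le; lra.
      apply Rmult_le_compat_l; auto. rewrite Rabs_mult, (Rabs_pos_eq 2) by lra.
      apply two_abs_le. }
    apply Rabs_le_inv in Hx.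
    replace (a t0 * (th t0 x0 * (F * (2 * x0)))) with (a t0 * F * (th t0 x0 * (2 * x0))) by ring.
    assert (0 < a t0 * F) by nra.
    assert (a t0 * F * (th t0 x0 * (2 * x0)) >= a t0 * F * (- (B * (1 + x0 ^ 2)))) by nra.
    assert (a t0 * F * (B * (1 + x0 ^ 2)) <= A * F * (B * (1 + x0^2))).
    { apply Rmult_le_compat_r. nra. apply Rmult_le_compat_r; lra. }
    nra. }
  unfold mu, lam in L1.
  assert (HA := A_pos).
  assert (0 <= x0^2) by nra.
  rewrite Rmult_plus_distr_l in K1.
  set (P1 := a t0 * (th t0 x0 * (F * (2 * x0)))) in *.
  set (P2 := a t0 * (E * v * Px t0 x0)) in *.
  set (P3 := / 2 * s2 * a t0 * (E * (dxx t0 x0 - Pxx t0 x0))) in *.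
  set (Q := E * (dt t0 x0 - Pt t0 x0)) in *.
  assert (L1' : A * K * (E * v) + E * v + Q + A * B * (F * (1 + x0 ^ 2)) + A * (F * (1 + x0 ^ 2)) <= 0).
  { eapply Rle_trans; [|exact L1]. right; ring. }
  assert (K6' : P1 >= - (A * B * (F * (1 + x0 ^ 2)))) by (eapply Rge_trans; [exact K6|right; ring]).
  assert (K5' : P2 >= - (A * K * (E * v))) by (eapply Rge_trans; [exact K5|right; ring]).
  assert (0 <= A * (F * x0^2)) by (apply Rmult_le_pos; [lra|apply Rmult_le_pos; lra]).
  assert (A * (F * (1 + x0 ^ 2)) = A * F + A * (F * x0^2)) by ring.
  assert (HQ : Q >= - (A*B*(F*(1+x0^2))) - A*K*(E*v) - A*F) by lra.
  assert (F * (1 + x0^2) > 0) by (apply Rmult_lt_0_compat; lra).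
  lra.
Qed.


Lemma lam_pos : 0 < lam.
Proof. unfold lam. assert (HA := A_pos). nra. Qed.
Lemma mu_pos : 0 < mu.
Proof. unfold mu. assert (HA := A_pos). assert (HB := B_nonneg). nra. Qed.

Lemma big_X eps : 0 < eps -> exists X, 0 < X /\ forall t y, 0 <= t <= T -> X <= Rabs y ->
  exp (lam * t) * (2 * B) < eps * exp (- mu * t) * (1 + y ^ 2).
Proof.
  intros Heps. assert (HB := B_nonneg). assert (Hl := lam_pos). assert (Hm := mu_pos).
  set (C := exp (lam * T) * (2 * B) / (eps * exp (- mu * T))).
  assert (HC : 0 <= C).
  { unfold C. apply Rmult_le_pos. apply Rmult_le_pos; [left; apply exp_pos|lra].
    left; apply Rinv_0_lt_compat. apply Rmult_lt_0_compat; [lra|apply exp_pos]. }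
  exists (C + 1). split; [lra|]. intros t y Ht Hy.
  assert (E1 : exp (lam * t) <= exp (lam * T)).
  { destruct (Req_dec t T) as [->|]; [lra|]. left; apply exp_increasing; nra. }
  assert (E2 : exp (- mu * T) <= exp (- mu * t)).
  { destruct (Req_dec t T) as [->|]; [lra|]. left; apply exp_increasing; nra. }
  assert (Hy2 : C < 1 + y ^ 2).
  { assert (Rabs y ^ 2 = y ^ 2) by apply pow2_abs.
    assert (C + 1 <= Rabs y ^ 2) by nra. lra. }
  assert (HeT : 0 < eps * exp (- mu * T)) by (apply Rmult_lt_0_compat; [lra|apply exp_pos]).
  assert (Hk : exp (lam * T) * (2 * B) = C * (eps * exp (- mu * T))) by (unfold C; assert (0 < exp (- mu * T)) by apply exp_pos; field; lra).
  apply Rle_lt_trans with (exp (lam * T) * (2 * B)).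
  apply Rmult_le_compat_r; lra.
  rewrite Hk.
  apply Rlt_le_trans with ((1 + y^2) * (eps * exp (- mu * T))).
  apply Rmult_lt_compat_r; lra.
  replace (eps * exp (- mu * t) * (1 + y ^ 2)) with ((1 + y^2) * (eps * exp (- mu * t))) by ring.
  apply Rmult_le_compat_l. nra. apply Rmult_le_compat_l; lra.
Qed.

Lemma VV_neg_far eps X t y : 0 < eps -> 0 <= t <= T -> X <= Rabs y ->
  (forall t y, 0 <= t <= T -> X <= Rabs y -> exp (lam * t) * (2 * B) < eps * exp (- mu * t) * (1 + y ^ 2)) ->
  VV eps t y < 0.
Proof.
  intros Heps Ht Hy HX. specialize (HX t y Ht Hy). unfold VV.
  assert (H1 := Hth t y Ht). assert (H2 := HPhi t y Ht).
  apply Rabs_le_inv in H1. apply Rabs_le_inv in H2.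
  assert (exp (lam * t) * (th t y - Phi t y) <= exp (lam * t) * (2 * B)).
  { apply Rmult_le_compat_l; [left; apply exp_pos|lra]. }
  lra.
Qed.

Lemma VV_cont eps : forall t x, continuity_2d_pt
  (fun t x => exp (lam * t) * (th (clamp 0 T t) x - Phi (clamp 0 T t) x) - eps * exp (- mu * t) * (1 + x * x)) t x.
Proof.
  intros t x.
  apply continuity_2d_pt_minus.
  - apply continuity_2d_pt_mult.
    + apply (continuity_1d_2d_pt_comp exp (fun t _ => lam * t)).
      apply derivable_continuous_pt, derivable_pt_exp.
      apply continuity_2d_pt_mult. apply continuity_2d_pt_const. apply continuity_2d_pt_id1.
    + apply continuity_2d_pt_minus; auto.
  - apply continuity_2d_pt_mult. apply continuity_2d_pt_mult. apply continuity_2d_pt_const.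
    + apply (continuity_1d_2d_pt_comp exp (fun t _ => - mu * t)).
      apply derivable_continuous_pt, derivable_pt_exp.
      apply continuity_2d_pt_mult. apply continuity_2d_pt_const. apply continuity_2d_pt_id1.
    + apply continuity_2d_pt_plus. apply continuity_2d_pt_const.
      apply continuity_2d_pt_mult; apply continuity_2d_pt_id2.
Qed.

Lemma rect_claim eps t1 xl xr : 0 < eps -> 0 < t1 < T -> xl < xr ->
  (forall t, t1 <= t <= T -> VV eps t xl < 0) ->
  (forall t, t1 <= t <= T -> VV eps t xr < 0) ->
  (forall y, xl <= y <= xr -> VV eps T y < 0) ->
  forall t y, t1 <= t <= T -> xl <= y <= xr -> VV eps t y <= 0.
Proof.
  intros Heps Ht1 Hx Hl Hr HT0 t y Ht Hy.
  destruct (EVT2 _ t1 T xl xr ltac:(lra) ltac:(lra) (VV_cont eps)) as [t0 [x0 [H0t [H0x Hmax]]]].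
  assert (Heq : forall t x, t1 <= t <= T -> 
    exp (lam * t) * (th (clamp 0 T t) x - Phi (clamp 0 T t) x) - eps * exp (- mu * t) * (1 + x * x) = VV eps t x).
  { intros t' x' Ht'. rewrite clamp_id by lra. unfold VV. ring. }
  assert (Hmax' : forall t x, t1 <= t <= T -> xl <= x <= xr -> VV eps t x <= VV eps t0 x0).
  { intros t' x' Ht' Hx'. rewrite <- Heq, <- (Heq t0) by lra. apply Hmax; auto. }
  destruct (Rle_dec (VV eps t y) 0) as [|Hn]; auto. exfalso.
  assert (Hp : 0 < VV eps t0 x0) by (specialize (Hmax' t y Ht Hy); lra).
  assert (Ht0 : t0 < T).
  { destruct (Req_dec t0 T) as [->|]; [|lra]. specialize (HT0 x0 H0x). lra. }
  assert (Hx0l : xl < x0).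
  { destruct (Req_dec x0 xl) as [->|]; [|lra]. specialize (Hl t0 H0t). lra. }
  assert (Hx0r : x0 < xr).
  { destruct (Req_dec x0 xr) as [->|]; [|lra]. specialize (Hr t0 H0t). lra. }
  set (h := Rmin (T - t0) (Rmin (x0 - xl) (xr - x0))).
  assert (Hh : 0 < h) by (unfold h; repeat apply Rmin_pos; lra).
  assert (Hh1 : h <= T - t0) by apply Rmin_l.
  assert (Hh2 : h <= x0 - xl) by (eapply Rle_trans; [apply Rmin_r|apply Rmin_l]).
  assert (Hh3 : h <= xr - x0) by (eapply Rle_trans; [apply Rmin_r|apply Rmin_r]).
  apply (core_contra eps t0 x0 h Heps Hh ltac:(lra)); auto.
  - intros t' Ht'. apply Hmax'; lra.
  - intros y' Hy'. apply Rabs_def2 in Hy'. apply Hmax'; lra.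
Qed.

Lemma small_all c d : 0 <= d -> (forall eps, 0 < eps -> c <= eps * d) -> c <= 0.
Proof.
  intros Hd H. destruct (Rle_dec c 0) as [|Hc]; auto. exfalso.
  assert (Hd' : 0 < d + 1) by lra.
  specialize (H (c / (2 * (d + 1)))). 
  assert (0 < c / (2 * (d+1))) by (apply Rdiv_lt_0_compat; lra).
  specialize (H H0). 
  assert (c / (2 * (d + 1)) * d < c) .
  { apply Rmult_lt_reg_r with (2 * (d+1)); [lra|].
    replace (c / (2 * (d + 1)) * d * (2 * (d + 1))) with (c * d) by (field; lra). nra. }
  lra.
Qed.

Lemma from_VV t y : (forall eps, 0 < eps -> VV eps t y <= 0) -> th t y <= Phi t y.
Proof.
  intros H. cut (th t y - Phi t y <= 0); [lra|].
  apply (small_all _ (exp (- mu * t) * (1 + y ^ 2) / exp (lam * t))).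
  { apply Rmult_le_pos. apply Rmult_le_pos. left; apply exp_pos.
    assert (0 <= y^2) by apply pow2_ge_0. lra. left; apply Rinv_0_lt_compat, exp_pos. }
  intros eps Heps. specialize (H eps Heps). unfold VV in H.
  assert (He := exp_pos (lam * t)).
  apply Rmult_le_reg_l with (exp (lam * t)); auto.
  replace (exp (lam * t) * (eps * (exp (- mu * t) * (1 + y ^ 2) / exp (lam * t))))
    with (eps * exp (- mu * t) * (1 + y ^ 2)) by (field; lra). lra.
Qed.

Lemma at_zero x : (forall t, 0 < t <= T -> th t x <= Phi t x) -> th 0 x <= Phi 0 x.
Proof.
  intros H. destruct (Rle_dec (th 0 x) (Phi 0 x)) as [|Hn]; auto. exfalso.
  set (f := fun t => th (clamp 0 T t) x - Phi (clamp 0 T t) x).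
  assert (Hc : continuity_pt f 0).
  { apply (cont2_pt_2 (fun t x => th (clamp 0 T t) x - Phi (clamp 0 T t) x) 0 x).
    apply continuity_2d_pt_minus; auto. }
  assert (Hf0 : f 0 = th 0 x - Phi 0 x) by (unfold f; rewrite clamp_id; lra).
  destruct (Hc (f 0) ltac:(lra)) as [d [Hd Hdd]].
  set (t := Rmin (d/2) T).
  assert (Ht : 0 < t <= T) by (unfold t, Rmin; destruct Rle_dec; lra).
  assert (t < d) by (unfold t, Rmin; destruct Rle_dec; lra).
  specialize (Hdd t). 
  assert (Hft : f t = th t x - Phi t x) by (unfold f; rewrite clamp_id; lra).
  unfold R_dist, dist in Hdd; simpl in Hdd.
  specialize (H t Ht).
  assert (Hq : Rabs (f t - f 0) < f 0).
  { apply Hdd. split. split; [exact I|lra]. simpl; unfold R_dist; rewrite Rminus_0_r, Rabs_pos_eq; lra. }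
  apply Rabs_def2 in Hq. lra.
Qed.

Theorem cmp_full : (forall x, th T x <= Phi T x) ->
  forall t x, 0 <= t <= T -> th t x <= Phi t x.
Proof.
  intros Hterm.
  assert (Hpos : forall t x, 0 < t <= T -> th t x <= Phi t x).
  { intros t x Ht. destruct (Req_dec t T) as [->|HtT]; [auto|].
    apply from_VV. intros eps Heps.
    destruct (big_X eps Heps) as [X [HX HXb]].
    set (X' := X + Rabs x).
    assert (HX'0 : X <= X') by (unfold X'; assert (0 <= Rabs x) by apply Rabs_pos; lra).
    assert (Hxr : - X' <= x <= X') by (unfold X'; apply Rabs_le_inv; lra).
    apply (rect_claim eps t (- X') X' Heps ltac:(lra) ltac:(lra)); try lra.
    - intros t' Ht'. apply (VV_neg_far eps X); auto. lra. rewrite Rabs_Ropp, Rabs_pos_eq; lra.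
    - intros t' Ht'. apply (VV_neg_far eps X); auto. lra. rewrite Rabs_pos_eq; lra.
    - intros y Hy. unfold VV. specialize (Hterm y).
      assert (0 < eps * exp (- mu * T) * (1 + y^2)).
      { apply Rmult_lt_0_compat. apply Rmult_lt_0_compat; [lra|apply exp_pos].
        assert (0 <= y^2) by apply pow2_ge_0. lra. }
      assert (exp (lam * T) * (th T y - Phi T y) <= 0).
      { match goal with |- ?E * _ <= 0 => rewrite <- (Rmult_0_r E) end; apply Rmult_le_compat_l; [left; apply exp_pos|lra]. }
      lra. }
  intros t x Ht. destruct (Req_dec t 0) as [->|]. apply at_zero; auto. apply Hpos; lra.
Qed.

Theorem cmp_half xl : (forall x, xl <= x -> th T x <= Phi T x) ->
  (forall t, 0 <= t <= T -> th t xl <= Phi t xl) ->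
  forall t x, 0 <= t <= T -> xl <= x -> th t x <= Phi t x.
Proof.
  intros Hterm Hbd.
  assert (Hpos : forall t x, 0 < t <= T -> xl <= x -> th t x <= Phi t x).
  { intros t x Ht Hx. destruct (Req_dec t T) as [->|HtT]; [auto|].
    destruct (Req_dec x xl) as [->|Hxl]. apply Hbd; lra.
    apply from_VV. intros eps Heps.
    destruct (big_X eps Heps) as [X [HX HXb]].
    set (X' := X + Rabs x + Rabs xl).
    assert (0 <= Rabs x) by apply Rabs_pos. assert (0 <= Rabs xl) by apply Rabs_pos.
    assert (Hxr : - X' <= x <= X') by (unfold X'; apply Rabs_le_inv; lra).
    assert (Hxlr : - X' <= xl <= X') by (unfold X'; apply Rabs_le_inv; lra).
    apply (rect_claim eps t xl X' Heps ltac:(lra)); try lra.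
    - intros t' Ht'. unfold VV. assert (H1 := Hbd t' ltac:(lra)).
      assert (0 < eps * exp (- mu * t') * (1 + xl^2)).
      { apply Rmult_lt_0_compat. apply Rmult_lt_0_compat; [lra|apply exp_pos].
        assert (0 <= xl^2) by apply pow2_ge_0. lra. }
      assert (exp (lam * t') * (th t' xl - Phi t' xl) <= 0).
      { match goal with |- ?E * _ <= 0 => rewrite <- (Rmult_0_r E) end; apply Rmult_le_compat_l; [left; apply exp_pos|lra]. }
      lra.
    - intros t' Ht'. apply (VV_neg_far eps X); auto. lra. unfold X'. rewrite Rabs_pos_eq; lra.
    - intros y Hy. unfold VV. specialize (Hterm y ltac:(lra)).
      assert (0 < eps * exp (- mu * T) * (1 + y^2)).
      { apply Rmult_lt_0_compat. apply Rmult_lt_0_compat; [lra|apply exp_pos].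
        assert (0 <= y^2) by apply pow2_ge_0. lra. }
      assert (exp (lam * T) * (th T y - Phi T y) <= 0).
      { match goal with |- ?E * _ <= 0 => rewrite <- (Rmult_0_r E) end; apply Rmult_le_compat_l; [left; apply exp_pos|lra]. }
      lra. }
  intros t x Ht Hx. destruct (Req_dec t 0) as [->|]. 
  apply at_zero. intros; apply Hpos; auto. apply Hpos; lra.
Qed.

End Cmp.

Lemma DefsRInt_eq f a b : ex_RInt f a b -> Defs.RInt f a b = RInt f a b.
Proof.
  intros Hex. unfold Defs.RInt.
  destruct excluded_middle_informative as [H|H].
  - destruct constructive_indefinite_description as [v [pr Hv]]; simpl.
    rewrite <- Hv. symmetry. apply RInt_Reals.
  - exfalso. apply H. exists (RiemannInt (ex_RInt_Reals_0 f a b Hex)).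
    exists (ex_RInt_Reals_0 f a b Hex). reflexivity.
Qed.

Lemma cont_clamp (g : R -> R) T : 0 < T -> cont_on_interval g 0 T ->
  forall t, continuity_pt (fun t => g (clamp 0 T t)) t.
Proof.
  intros HT Hg t eps Heps.
  destruct (Hg (clamp 0 T t) (clamp_in 0 T t ltac:(lra)) eps Heps) as [d [Hd Hdd]].
  exists d; split; auto. intros y [_ Hy]. simpl in *. unfold R_dist in *.
  apply Hdd. apply clamp_in; lra.
  eapply Rle_lt_trans; [apply clamp_lip; lra|]. exact Hy.
Qed.

Lemma cont_to_continuous f x : continuity_pt f x -> continuous f x.
Proof. intros H. apply continuity_pt_filterlim. exact H. Qed.

Lemma is_derive_lower f t T : (forall x, continuity_pt f x) ->
  derivable_pt_lim (fun a => RInt f a T) t (- f t).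
Proof.
  intros Hc. apply is_derive_Reals.
  apply (is_derive_RInt' (V := R_CompleteNormedModule) f (fun a => RInt f a T) t T).
  - apply filter_forall. intros a0. apply (RInt_correct (V := R_CompleteNormedModule)). apply (ex_RInt_continuous (V := R_CompleteNormedModule)).
    intros; apply cont_to_continuous; auto.
  - apply cont_to_continuous; auto.
Qed.

Section RW.
Variables (T kappa : R) (eta : R -> R).
Hypothesis HT : 0 < T.
Hypothesis Heta : is_eta T kappa eta.

Definition ec t := eta (clamp 0 T t) - kappa.
Definition CI t := RInt ec t T.
Definition wt t := exp (CI t).
Definition aa t := / (wt t) ^ 2.
Definition rt t := RInt aa t T.

Lemma ec_cont t : continuity_pt ec t.
Proof.
  unfold ec. apply continuity_pt_minus. apply cont_clamp; auto. apply Heta.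
  apply continuity_pt_const. intros ??; auto.
Qed.

Lemma CI_deriv t : derivable_pt_lim CI t (- ec t).
Proof. apply is_derive_lower. apply ec_cont. Qed.

Lemma wt_pos t : 0 < wt t.
Proof. apply exp_pos. Qed.

Lemma aa_deriv t : derivable_pt_lim aa t (- (2 * (- ec t * wt t) * wt t) / (wt t ^ 2) ^ 2).
Proof.
  unfold aa. apply D_inv. apply pow_nonzero. apply Rgt_not_eq, wt_pos.
  apply D_sq. unfold wt. apply D_exp. apply CI_deriv.
Qed.

Lemma aa_cont t : continuity_pt aa t.
Proof. eapply derivable_continuous_pt. exists (- (2 * (- ec t * wt t) * wt t) / (wt t ^ 2) ^ 2). apply aa_deriv. Qed.

Lemma aa_pos t : 0 < aa t.
Proof. unfold aa. apply Rinv_0_lt_compat. apply pow_lt, wt_pos. Qed.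

Lemma rt_deriv t : derivable_pt_lim rt t (- aa t).
Proof. apply is_derive_lower. apply aa_cont. Qed.

Lemma rt_cont t : continuity_pt rt t.
Proof. eapply derivable_continuous_pt. exists (- aa t). apply rt_deriv. Qed.

Lemma w_eq t : 0 <= t <= T -> w_fun T kappa eta t = wt t.
Proof.
  intros Ht. unfold w_fun, wt, CI. f_equal.
  assert (Hex : ex_RInt ec t T) by (apply (ex_RInt_continuous (V := R_CompleteNormedModule)); intros; apply cont_to_continuous, ec_cont).
  assert (Hext : forall x, Rmin t T < x < Rmax t T -> ec x = eta x - kappa).
  { intros x Hx. unfold ec. rewrite clamp_id; auto. unfold Rmin, Rmax in Hx; destruct Rle_dec; lra. }
  rewrite DefsRInt_eq. apply RInt_ext. intros; symmetry; auto.
  eapply ex_RInt_ext; [|exact Hex]. auto.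
Qed.

Lemma a_eq t : 0 <= t <= T -> / (w_fun T kappa eta t) ^ 2 = aa t.
Proof. intros; rewrite w_eq; auto. Qed.

Lemma r_eq t : 0 <= t <= T -> r_fun T kappa eta t = rt t.
Proof.
  intros Ht. unfold r_fun, rt.
  assert (Hex : ex_RInt aa t T) by (apply (ex_RInt_continuous (V := R_CompleteNormedModule)); intros; apply cont_to_continuous, aa_cont).
  assert (Hext : forall x, Rmin t T < x < Rmax t T -> aa x = / w_fun T kappa eta x ^ 2).
  { intros x Hx. rewrite a_eq; auto. unfold Rmin, Rmax in Hx; destruct Rle_dec; lra. }
  rewrite DefsRInt_eq. apply RInt_ext. intros; symmetry; auto.
  eapply ex_RInt_ext; [|exact Hex]. auto.
Qed.

Lemma rt_T : rt T = 0.
Proof. unfold rt. apply (RInt_point (V := R_CompleteNormedModule)). Qed.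

Lemma rt_decr t t' : t < t' -> rt t' < rt t.
Proof.
  intros H. destruct (MVT_cor2 rt (fun x => - aa x) t t' H) as [c [Hc _]].
  intros; apply rt_deriv.
  assert (0 < aa c) by apply aa_pos. nra.
Qed.

Lemma aa_bound : exists A, forall t, 0 <= t <= T -> 0 < aa t <= A.
Proof.
  destruct (continuity_ab_maj aa 0 T ltac:(lra) (fun c _ => aa_cont c)) as [M [HM _]].
  exists (aa M). intros; split; [apply aa_pos|auto].
Qed.

End RW.

Lemma exRI f a b : (forall z, Rmin a b <= z <= Rmax a b -> continuity_pt f z) -> ex_RInt f a b.
Proof. intros H. apply (ex_RInt_continuous (V := R_CompleteNormedModule)). intros z Hz.
  apply continuity_pt_filterlim. auto. Qed.

Lemma RI_bound f x M : ex_RInt f 0 x -> (forall z, Rmin 0 x <= z <= Rmax 0 x -> Rabs (f z) <= M) ->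
  Rabs (RInt f 0 x) <= M * Rabs x.
Proof.
  intros Hex Hb. destruct (Rle_dec 0 x) as [Hx|Hx].
  - assert (H := abs_RInt_le_const f 0 x M Hx Hex).
    rewrite (Rabs_pos_eq x) by lra. rewrite Rmult_comm. replace x with (x - 0) at 2 by ring.
    apply H. intros t Ht. apply Hb. unfold Rmin, Rmax; destruct Rle_dec; lra.
  - apply Rnot_le_lt in Hx. assert (Hex' : ex_RInt f x 0) by (apply ex_RInt_swap; auto).
    assert (H := abs_RInt_le_const f x 0 M ltac:(lra) Hex').
    rewrite <- (opp_RInt_swap (V := R_CompleteNormedModule) f x 0 Hex').
    unfold opp; simpl. rewrite Rabs_Ropp. rewrite (Rabs_left x) by lra.
    replace (M * - x) with ((0 - x) * M) by ring. apply H.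
    intros t Ht. apply Hb. unfold Rmin, Rmax; destruct Rle_dec; lra.
Qed.

Lemma RI_deriv_upper f a x : (forall z, continuity_pt f z) -> derivable_pt_lim (fun y => RInt f a y) x (f x).
Proof.
  intros Hc. apply is_derive_Reals.
  apply (is_derive_RInt (V := R_CompleteNormedModule) f (fun y => RInt f a y) a x).
  - apply filter_forall. intros b0. apply (RInt_correct (V := R_CompleteNormedModule)). apply exRI. auto.
  - apply continuity_pt_filterlim; auto.
Qed.

Lemma RI_deriv_upper_loc f a x l r : l < a < r -> l < x < r ->
  (forall z, l < z < r -> continuity_pt f z) -> derivable_pt_lim (fun y => RInt f a y) x (f x).
Proof.
  intros Ha Hx Hc. apply is_derive_Reals.
  apply (is_derive_RInt (V := R_CompleteNormedModule) f (fun y => RInt f a y) a x).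
  - set (d := Rmin (x - l) (r - x)).
    assert (Hd : 0 < d) by (unfold d; apply Rmin_pos; lra).
    exists (mkposreal d Hd). intros b0 Hb0. simpl in Hb0. unfold ball in Hb0; simpl in Hb0.
    unfold AbsRing_ball, abs, minus, plus, opp in Hb0; simpl in Hb0.
    assert (Hd1 : d <= x - l) by apply Rmin_l. assert (Hd2 : d <= r - x) by apply Rmin_r.
    apply Rabs_def2 in Hb0.
    apply (RInt_correct (V := R_CompleteNormedModule)). apply exRI.
    intros z Hz. apply Hc. unfold Rmin, Rmax in Hz; destruct Rle_dec; lra.
  - apply continuity_pt_filterlim; auto.
Qed.

Lemma RI_FTC F dF a b : (forall z, Rmin a b <= z <= Rmax a b -> derivable_pt_lim F z (dF z)) ->
  (forall z, Rmin a b <= z <= Rmax a b -> continuity_pt dF z) ->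
  RInt dF a b = F b - F a.
Proof.
  intros Hd Hc. apply is_RInt_unique.
  apply (is_RInt_derive (V := R_CompleteNormedModule) F dF a b).
  - intros; apply is_derive_Reals; auto.
  - intros; apply continuity_pt_filterlim; auto.
Qed.

Lemma RI_scal f c a b : ex_RInt f a b -> RInt (fun y => c * f y) a b = c * RInt f a b.
Proof. intros H. apply (RInt_scal (V := R_CompleteNormedModule) f a b c H). Qed.

Section MP.
Variables (W Wt Wx Wxx b : R -> R -> R) (a : R -> R) (A B C nu t1 t2 eps M : R).
Hypothesis Ht12 : t1 < t2.
Hypothesis Heps : 0 < eps.
Hypothesis Hnu : 0 <= nu <= 1/2.
Hypothesis HB : 0 <= B.
Hypothesis HC : 0 <= C.
Hypothesis Ha : forall t, t1 <= t <= t2 -> 0 < a t <= A.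
Hypothesis Hb : forall t x, t1 <= t <= t2 -> Rabs (b t x) <= B.
Hypothesis HW : forall t x, t1 <= t <= t2 -> Rabs (W t x) <= C * (1 + Rabs x).
Hypothesis HcW : forall t x, continuity_2d_pt (fun t x => W (clamp t1 t2 t) x) t x.
Hypothesis HWt : forall t x, t1 <= t < t2 -> derivable_pt_lim (fun s => W s x) t (Wt t x).
Hypothesis HWx : forall t x, t1 <= t <= t2 -> derivable_pt_lim (W t) x (Wx t x).
Hypothesis HWxx : forall t x, t1 <= t <= t2 -> derivable_pt_lim (Wx t) x (Wxx t x).
Hypothesis Hpde : forall t x, t1 <= t < t2 -> Wt t x = a t * (b t x * Wx t x - nu * Wxx t x).
Hypothesis Hend : forall y, W t2 y - eps * (1 + y ^ 2) <= M.

Definition mup := A * (B + 1) + 1.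

Definition ZZ t x := W t x - eps * exp (mup * (t2 - t)) * (1 + x ^ 2) - M.

Lemma mp_core t0 x0 h : 0 < h -> t1 <= t0 < t2 ->
  (forall t, t0 <= t < t0 + h -> ZZ t x0 <= ZZ t0 x0) ->
  (forall y, Rabs (y - x0) < h -> ZZ t0 y <= ZZ t0 x0) -> False.
Proof.
  intros Hh Ht0 Hmt Hmx.
  set (e := exp (mup * (t2 - t0))).
  assert (He : 0 < e) by apply exp_pos.
  assert (Dt : derivable_pt_lim (fun t => ZZ t x0) t0 (Wt t0 x0 + eps * mup * e * (1 + x0 ^ 2))).
  { assert (De : derivable_pt_lim (fun t => exp (mup * (t2 - t))) t0 (- mup * e)).
    { eapply D_val; [|apply D_exp; apply D_scal; apply D_minus; [apply D_const|apply D_id]]. unfold e; ring. }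
    unfold ZZ. eapply D_val; [|apply D_minus; [apply D_minus; [apply HWt; auto|apply D_mult; [apply D_scal; apply De|apply D_const]]|apply D_const]].
    unfold e; cbv beta; ring. }
  assert (Dx : forall y, derivable_pt_lim (fun y => ZZ t0 y) y (Wx t0 y - eps * e * (2 * y))).
  { intros y. unfold ZZ. eapply D_val; [|apply D_minus; [apply D_minus; [apply HWx; lra|apply D_scal; apply D_plus; [apply D_const|apply (D_ext (fun y => y * y)); [intros; ring|apply D_mult; apply D_id]]]|apply D_const]].
    unfold e. ring. }
  assert (Dxx : derivable_pt_lim (fun y => Wx t0 y - eps * e * (2 * y)) x0 (Wxx t0 x0 - eps * e * 2)).
  { eapply D_val; [|apply D_minus; [apply HWxx; lra|apply D_scal; apply D_scal; apply D_id]]. ring. }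
  assert (L1 := deriv_rmax _ _ _ h Hh Dt Hmt).
  assert (L2 := deriv_locmax_0 _ _ _ h Hh (Dx x0) Hmx).
  assert (L3 := deriv2_locmax _ _ _ _ h Hh (fun y _ => Dx y) Dxx Hmx).
  rewrite Hpde in L1 by lra.
  assert (Ha0 := Ha t0 ltac:(lra)). assert (Hb0 := Hb t0 x0 ltac:(lra)). apply Rabs_le_inv in Hb0.
  assert (HWx0 : Wx t0 x0 = eps * e * (2 * x0)) by lra.
  rewrite HWx0 in L1.
  assert (Q1 : b t0 x0 * (eps * e * (2 * x0)) >= - B * eps * e * (1 + x0^2)).
  { assert (Habs : Rabs (b t0 x0 * (2 * x0)) <= B * (1 + x0^2)).
    { rewrite Rabs_mult. apply Rle_trans with (B * Rabs (2 * x0)).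
      apply Rmult_le_compat_r. apply Rabs_pos. apply Rabs_le; lra.
      apply Rmult_le_compat_l; auto. rewrite Rabs_mult, (Rabs_pos_eq 2) by lra. apply two_abs_le. }
    apply Rabs_le_inv in Habs.
    replace (b t0 x0 * (eps * e * (2 * x0))) with (eps * e * (b t0 x0 * (2 * x0))) by ring.
    assert (0 < eps * e) by nra. nra. }
  assert (Q2 : - nu * Wxx t0 x0 >= - eps * e) by (assert (0 < eps * e) by nra; destruct (Rle_dec 0 (Wxx t0 x0)); nra).
  set (S := b t0 x0 * (eps * e * (2 * x0)) - nu * Wxx t0 x0) in *.
  assert (Q3 : S >= - (B * eps * e * (1 + x0^2)) - eps * e) by (unfold S; lra).
  assert (Q4 : a t0 * S >= - A * (B * eps * e * (1 + x0^2) + eps * e)).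
  { assert (0 <= B * eps * e * (1 + x0^2) + eps * e).
    { assert (0 <= x0^2) by apply pow2_ge_0. assert (0 < eps * e) by nra.
      assert (0 <= B * (eps * e) * (1 + x0^2)) by (apply Rmult_le_pos; nra). nra. }
    assert (a t0 * S >= a t0 * (- (B * eps * e * (1 + x0^2) + eps * e))) by nra. nra. }
  unfold mup in L1.
  assert (0 <= x0^2) by apply pow2_ge_0.
  assert (0 < eps * e) by nra.
  assert (Hfin : eps * mup * e * (1 + x0^2) = (A * B + A + 1) * (eps * e * (1 + x0^2))) by (unfold mup; ring).
  unfold mup in Hfin. rewrite Hfin in L1.
  assert (0 < eps * e * (1 + x0^2)) by nra.
  assert (A * (B * eps * e * (1 + x0 ^ 2) + eps * e) <= (A * B + A) * (eps * e * (1 + x0^2))).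
  { assert (eps * e <= eps * e * (1 + x0^2)) by nra. 
    replace (A * (B * eps * e * (1 + x0 ^ 2) + eps * e)) with (A * B * (eps * e * (1 + x0^2)) + A * (eps * e)) by ring.
    assert (A * (eps * e) <= A * (eps * e * (1 + x0^2))) by (apply Rmult_le_compat_l; lra). nra. }
  nra.
Qed.

Lemma mp_upper : forall t x, t1 <= t <= t2 ->
  W t x - eps * exp (mup * (t2 - t)) * (1 + x ^ 2) <= M.
Proof.
  intros t x Ht.
  destruct (Rle_dec (W t x - eps * exp (mup * (t2 - t)) * (1 + x ^ 2)) M) as [|Hn]; auto. exfalso.
  set (X := 1 + (2 * C + Rabs M) / eps + Rabs x).
  assert (0 <= Rabs M) by apply Rabs_pos. assert (0 <= Rabs x) by apply Rabs_pos.
  assert (HX1 : 1 + (2 * C + Rabs M) / eps <= X) by (unfold X; lra).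
  assert (Hq : 0 <= (2 * C + Rabs M) / eps) by (apply Rmult_le_pos; [lra|left; apply Rinv_0_lt_compat; lra]).
  assert (Hfar : forall s y, t1 <= s <= t2 -> 1 + (2 * C + Rabs M) / eps <= Rabs y -> ZZ s y < 0).
  { intros s y Hs Hy. unfold ZZ.
    assert (E1 : 1 <= exp (mup * (t2 - s))).
    { rewrite <- exp_0. destruct (Req_dec s t2) as [->|]. rewrite Rminus_eq_0, Rmult_0_r; lra.
      left; apply exp_increasing. unfold mup. apply Rmult_lt_0_compat; [|lra].
      assert (0 < A) by (destruct (Ha t1 ltac:(lra)); lra). nra. }
    assert (HWs := HW s y Hs).
    apply Rabs_le_inv in HWs.
    assert (Hy2 : Rabs y ^ 2 = y ^ 2) by apply pow2_abs.
    assert (Hyy : Rabs y * (1 + (2 * C + Rabs M) / eps) <= y ^ 2).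
    { rewrite <- Hy2. simpl. rewrite Rmult_1_r. apply Rmult_le_compat_l; [apply Rabs_pos|lra]. }
    assert (Hk : eps * (Rabs y * (1 + (2 * C + Rabs M) / eps)) = eps * Rabs y + (2 * C + Rabs M) * Rabs y)
      by (field; lra).
    assert (eps * (1 + y^2) <= eps * exp (mup * (t2 - s)) * (1 + y ^ 2)).
    { assert (0 <= y^2) by apply pow2_ge_0.
      replace (eps * (1 + y^2)) with (eps * 1 * (1 + y^2)) by ring.
      apply Rmult_le_compat_r; [lra|]. apply Rmult_le_compat_l; lra. }
    assert (eps * (Rabs y * (1 + (2 * C + Rabs M) / eps)) <= eps * y^2) by (apply Rmult_le_compat_l; lra).
    assert (- Rabs M <= M) by (unfold Rabs; destruct Rcase_abs; lra).
    assert (1 <= Rabs y) by lra.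
    assert (Rabs M <= Rabs M * Rabs y) by nra.
    assert (C <= C * Rabs y) by nra.
    nra. }
  assert (Hxr : - X <= x <= X) by (apply Rabs_le_inv; unfold X; lra).
  destruct (EVT2 (fun t x => W (clamp t1 t2 t) x - eps * exp (mup * (t2 - t)) * (1 + x * x) - M)
              t1 t2 (- X) X ltac:(lra) ltac:(lra)) as [t0 [x0 [H0t [H0x Hmax]]]].
  { intros s y. apply continuity_2d_pt_minus; [|apply continuity_2d_pt_const].
    apply continuity_2d_pt_minus; auto.
    apply continuity_2d_pt_mult. apply continuity_2d_pt_mult. apply continuity_2d_pt_const.
    + apply (continuity_1d_2d_pt_comp exp (fun t _ => mup * (t2 - t))).
      apply derivable_continuous_pt, derivable_pt_exp.
      apply continuity_2d_pt_mult. apply continuity_2d_pt_const.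
      apply continuity_2d_pt_minus. apply continuity_2d_pt_const. apply continuity_2d_pt_id1.
    + apply continuity_2d_pt_plus. apply continuity_2d_pt_const.
      apply continuity_2d_pt_mult; apply continuity_2d_pt_id2. }
  assert (Hmax' : forall s y, t1 <= s <= t2 -> - X <= y <= X -> ZZ s y <= ZZ t0 x0).
  { intros s y Hs Hy. specialize (Hmax s y Hs Hy). rewrite !clamp_id in Hmax by lra.
    unfold ZZ. replace (y^2) with (y*y) by ring. replace (x0^2) with (x0*x0) by ring. lra. }
  assert (Hp : 0 < ZZ t0 x0) by (specialize (Hmax' t x Ht Hxr); unfold ZZ in *; lra).
  assert (Ht0 : t0 < t2).
  { destruct (Req_dec t0 t2) as [->|]; [|lra]. exfalso. unfold ZZ in Hp.
    rewrite Rminus_eq_0, Rmult_0_r, exp_0 in Hp. specialize (Hend x0). lra. }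
  assert (Hx0 : Rabs x0 < X).
  { destruct (Rlt_dec (Rabs x0) X) as [|Hn']; auto. exfalso.
    assert (ZZ t0 x0 < 0) by (apply Hfar; lra). lra. }
  apply Rabs_def2 in Hx0.
  set (h := Rmin (t2 - t0) (Rmin (x0 + X) (X - x0))).
  assert (Hh : 0 < h) by (unfold h; repeat apply Rmin_pos; lra).
  assert (Hh1 : h <= t2 - t0) by apply Rmin_l.
  assert (Hh2 : h <= x0 + X) by (eapply Rle_trans; [apply Rmin_r|apply Rmin_l]).
  assert (Hh3 : h <= X - x0) by (eapply Rle_trans; [apply Rmin_r|apply Rmin_r]).
  apply (mp_core t0 x0 h Hh ltac:(lra)).
  - intros s Hs. apply Hmax'; lra.
  - intros y Hy. apply Rabs_def2 in Hy. apply Hmax'; lra.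
Qed.
End MP.

Section Uniq.
Variables (T A B s2 : R) (a : R -> R) (th1 dt1 dx1 dxx1 th2 dt2 dx2 dxx2 : R -> R -> R).
Hypothesis HT : 0 < T.
Hypothesis Hs2 : 0 <= s2 <= 1.
Hypothesis Ha : forall t, 0 <= t <= T -> 0 < a t <= A.
Hypothesis Hac : forall t, continuity_pt a t.
Hypothesis Hb1 : forall t x, 0 <= t <= T -> Rabs (th1 t x) <= B.
Hypothesis Hb2 : forall t x, 0 <= t <= T -> Rabs (th2 t x) <= B.
Hypothesis Hc1 : forall t x, continuity_2d_pt (fun t x => th1 (clamp 0 T t) x) t x.
Hypothesis Hc2 : forall t x, continuity_2d_pt (fun t x => th2 (clamp 0 T t) x) t x.
Hypothesis Hcdt1 : forall t x, 0 < t < T -> continuity_2d_pt dt1 t x.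
Hypothesis Hcdt2 : forall t x, 0 < t < T -> continuity_2d_pt dt2 t x.
Hypothesis Hcdx1 : forall t x, 0 < t < T -> continuity_2d_pt dx1 t x.
Hypothesis Hcdx2 : forall t x, 0 < t < T -> continuity_2d_pt dx2 t x.
Hypothesis Hcdxx1 : forall t x, 0 < t < T -> continuity_2d_pt dxx1 t x.
Hypothesis Hcdxx2 : forall t x, 0 < t < T -> continuity_2d_pt dxx2 t x.
Hypothesis Hdt1 : forall t x, 0 < t < T -> derivable_pt_lim (fun s => th1 s x) t (dt1 t x).
Hypothesis Hdt2 : forall t x, 0 < t < T -> derivable_pt_lim (fun s => th2 s x) t (dt2 t x).
Hypothesis Hdx1 : forall t x, 0 < t < T -> derivable_pt_lim (fun y => th1 t y) x (dx1 t x).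
Hypothesis Hdx2 : forall t x, 0 < t < T -> derivable_pt_lim (fun y => th2 t y) x (dx2 t x).
Hypothesis Hdxx1 : forall t x, 0 < t < T -> derivable_pt_lim (fun y => dx1 t y) x (dxx1 t x).
Hypothesis Hdxx2 : forall t x, 0 < t < T -> derivable_pt_lim (fun y => dx2 t y) x (dxx2 t x).
Hypothesis Hpde1 : forall t x, 0 < t < T ->
  dt1 t x - a t * th1 t x * dx1 t x + / 2 * s2 * a t * dxx1 t x = 0.
Hypothesis Hpde2 : forall t x, 0 < t < T ->
  dt2 t x - a t * th2 t x * dx2 t x + / 2 * s2 * a t * dxx2 t x = 0.
Hypothesis Hterm : forall x, th1 T x = th2 T x.

Definition vv t x := th1 t x - th2 t x.
Definition nu := s2 / 2.
Definition Fl t x := (th1 t x ^ 2 - th2 t x ^ 2) / 2 - nu * (dx1 t x - dx2 t x).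
Definition Flx t x := th1 t x * dx1 t x - th2 t x * dx2 t x - nu * (dxx1 t x - dxx2 t x).
Definition Vi t x := RInt (fun y => vv t y) 0 x.

Lemma vv_cont_x t x : 0 < t < T -> continuity_pt (vv t) x.
Proof.
  intros Ht. apply derivable_continuous_pt. exists (dx1 t x - dx2 t x).
  unfold vv. apply D_minus; auto.
Qed.

Lemma Vi_dx t x : 0 < t < T -> derivable_pt_lim (Vi t) x (vv t x).
Proof. intros Ht. unfold Vi. apply RI_deriv_upper. intros; apply vv_cont_x; auto. Qed.

Lemma Fl_dx t x : 0 < t < T -> derivable_pt_lim (Fl t) x (Flx t x).
Proof.
  intros Ht. unfold Fl, Flx.
  eapply D_val; [|apply D_minus; [apply (D_ext (fun y => / 2 * (th1 t y ^ 2 - th2 t y ^ 2)));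
     [intros; unfold Rdiv; ring|apply D_scal; apply D_minus; apply D_sq; auto]|apply D_scal; apply D_minus; auto]].
  cbv beta. field.
Qed.

Lemma Flx_cont t x : 0 < t < T -> continuity_pt (Flx t) x.
Proof.
  intros Ht. unfold Flx.
  assert (C1 : continuity_pt (th1 t) x) by (eapply C_of_D; apply Hdx1; auto).
  assert (C2 : continuity_pt (th2 t) x) by (eapply C_of_D; apply Hdx2; auto).
  assert (C3 : continuity_pt (dx1 t) x) by (apply cont2_pt_1; auto).
  assert (C4 : continuity_pt (dx2 t) x) by (apply cont2_pt_1; auto).
  assert (C5 : continuity_pt (dxx1 t) x) by (apply cont2_pt_1; auto).
  assert (C6 : continuity_pt (dxx2 t) x) by (apply cont2_pt_1; auto).
  apply C_minus. apply C_minus.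
  apply C_mult; auto. apply C_mult; auto.
  apply C_scal. apply C_minus; auto.
Qed.

Lemma dt_flux t x : 0 < t < T -> dt1 t x - dt2 t x = a t * Flx t x.
Proof.
  intros Ht. assert (H1 := Hpde1 t x Ht). assert (H2 := Hpde2 t x Ht).
  unfold Flx, nu. lra.
Qed.

Lemma interior_nbhd t : 0 < t < T -> exists d, 0 < d /\ forall u, Rabs (u - t) < d -> 0 < u < T.
Proof.
  intros Ht. exists (Rmin t (T - t)). split. apply Rmin_pos; lra.
  intros u Hu. apply Rabs_def2 in Hu. assert (Rmin t (T - t) <= t) by apply Rmin_l.
  assert (Rmin t (T - t) <= T - t) by apply Rmin_r. lra.
Qed.

Lemma Vi_dt t x : 0 < t < T -> derivable_pt_lim (fun s => Vi s x) t (a t * (Fl t x - Fl t 0)).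
Proof.
  intros Ht. destruct (interior_nbhd t Ht) as [d [Hd Hn]].
  apply is_derive_Reals. unfold Vi.
  assert (Hder : forall u y, 0 < u < T -> Derive (fun z => vv z y) u = dt1 u y - dt2 u y).
  { intros u y Hu. apply is_derive_unique. apply is_derive_Reals. unfold vv. apply D_minus; auto. }
  assert (Heq : RInt (fun y => Derive (fun u => vv u y) t) 0 x = a t * (Fl t x - Fl t 0)).
  { rewrite (RInt_ext _ (fun y => a t * Flx t y)).
    rewrite RI_scal. f_equal. apply RI_FTC. intros; apply Fl_dx; auto. intros; apply Flx_cont; auto.
    apply exRI. intros; apply Flx_cont; auto.
    intros y _. rewrite Hder by auto. apply dt_flux; auto. }
  rewrite <- Heq.
  apply (is_derive_RInt_param (fun u y => vv u y) 0 x t).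
  - exists (mkposreal d Hd). intros u Hu y _. simpl in Hu. unfold ball in Hu; simpl in Hu.
    unfold AbsRing_ball, abs, minus, plus, opp in Hu; simpl in Hu.
    exists (dt1 u y - dt2 u y). apply is_derive_Reals. unfold vv. apply D_minus; apply Hdt1 || apply Hdt2; auto.
  - intros y _. apply continuity_2d_pt_ext_loc with (f := fun u y => dt1 u y - dt2 u y).
    + exists (mkposreal d Hd). intros u w Hu _. simpl in Hu. rewrite Hder; auto.
    + apply continuity_2d_pt_minus; auto.
  - exists (mkposreal d Hd). intros u Hu. simpl in Hu. unfold ball in Hu; simpl in Hu.
    unfold AbsRing_ball, abs, minus, plus, opp in Hu; simpl in Hu.
    apply exRI. intros; apply vv_cont_x; auto.
Qed.

Definition GG t := a t * Fl t 0.
Definition DD t := RInt GG (T / 2) t.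

Lemma GG_cont t : 0 < t < T -> continuity_pt GG t.
Proof.
  intros Ht. unfold GG, Fl. apply C_mult; auto.
  assert (C1 : continuity_pt (fun s => th1 s 0) t).
  { apply C_of_D with (dt1 t 0); auto. }
  assert (C2 : continuity_pt (fun s => th2 s 0) t).
  { apply C_of_D with (dt2 t 0); auto. }
  apply C_minus. apply (C_ext (fun s => / 2 * (th1 s 0 * th1 s 0 - th2 s 0 * th2 s 0))).
  intros; unfold Rdiv; ring.
  apply C_scal. apply C_minus; apply C_mult; auto.
  apply C_scal. apply C_minus; apply cont2_pt_2; auto.
Qed.

Lemma DD_dt t : 0 < t < T -> derivable_pt_lim DD t (GG t).
Proof.
  intros Ht. unfold DD. apply (RI_deriv_upper_loc GG (T/2) t 0 T); try lra.
  intros; apply GG_cont; auto.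
Qed.


Definition WW t x := Vi t x + DD t.
Definition bb t x := (th1 t x + th2 t x) / 2.

Lemma B_nn : 0 <= B.
Proof. eapply Rle_trans; [apply Rabs_pos|apply (Hb1 0 0)]; lra. Qed.

Lemma vv_bound t x : 0 <= t <= T -> Rabs (vv t x) <= 2 * B.
Proof.
  intros Ht. unfold vv. assert (H1 := Hb1 t x Ht). assert (H2 := Hb2 t x Ht).
  apply Rabs_le_inv in H1. apply Rabs_le_inv in H2. apply Rabs_le. lra.
Qed.

Lemma Vi_bound t x : 0 < t < T -> Rabs (Vi t x) <= 2 * B * Rabs x.
Proof.
  intros Ht. unfold Vi. apply RI_bound. apply exRI; intros; apply vv_cont_x; auto.
  intros; apply vv_bound; lra.
Qed.

Lemma Vi_zero t : Vi t 0 = 0.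
Proof. unfold Vi. apply (RInt_point (V := R_CompleteNormedModule)). Qed.

Section Slab.
Variables (t1 t2 : R).
Hypothesis Ht1 : 0 < t1.
Hypothesis Ht12 : t1 < t2.
Hypothesis Ht2 : t2 < T.

Lemma slab_DD_bound : exists Dm, 0 <= Dm /\ forall t, t1 <= t <= t2 -> Rabs (DD t) <= Dm.
Proof.
  destruct (continuity_ab_maj (fun t => Rabs (DD t)) t1 t2 ltac:(lra)) as [m [Hm _]].
  { intros c Hc. apply (continuity_pt_comp DD Rabs). eapply C_of_D. apply DD_dt; lra.
    apply Rcontinuity_abs. }
  exists (Rabs (DD m)). split; [apply Rabs_pos|]. auto.
Qed.

Lemma slab_cont : forall t x, continuity_2d_pt (fun t x => WW (clamp t1 t2 t) x) t x.
Proof.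
  apply (cont2_lip _ (fun t x => vv (clamp t1 t2 t) x) (2 * B)).
  - intros t x. unfold WW. assert (Hc := clamp_in t1 t2 t ltac:(lra)).
    eapply D_val; [|apply D_plus; [apply Vi_dx|apply D_const]]. ring. lra.
  - intros t x. apply vv_bound. assert (Hc := clamp_in t1 t2 t ltac:(lra)). lra.
  - intros t x. assert (Hc := clamp_in t1 t2 t ltac:(lra)).
    apply (continuity_pt_comp (clamp t1 t2) (fun s => WW s x)).
    + intros eps Heps. exists eps. split; auto. intros y [_ Hy]. simpl in *. unfold R_dist in *.
      eapply Rle_lt_trans; [apply clamp_lip; lra|auto].
    + unfold WW. apply C_plus. eapply C_of_D. apply Vi_dt; lra. eapply C_of_D. apply DD_dt; lra.
Qed.

Lemma slab_mp eps M (sg : R) : 0 < eps -> (sg = 1 \/ sg = -1) ->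
  (forall y, sg * WW t2 y - eps * (1 + y ^ 2) <= M) ->
  forall t x, t1 <= t <= t2 -> sg * WW t x - eps * exp (mup A B * (t2 - t)) * (1 + x ^ 2) <= M.
Proof.
  intros Heps Hsg Hend.
  destruct slab_DD_bound as [Dm [HDm HDb]].
  assert (HB := B_nn).
  apply (mp_upper (fun t x => sg * WW t x) (fun t x => sg * (a t * Fl t x)) (fun t x => sg * vv t x)
     (fun t x => sg * (dx1 t x - dx2 t x)) bb a A B (2 * B + Dm) nu t1 t2 eps M); auto.
  - unfold nu; lra.
  - lra.
  - intros; apply Ha; lra.
  - intros t x Ht. unfold bb. assert (H1 := Hb1 t x ltac:(lra)). assert (H2 := Hb2 t x ltac:(lra)).
    apply Rabs_le_inv in H1. apply Rabs_le_inv in H2. apply Rabs_le. lra.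
  - intros t x Ht. unfold WW. assert (H1 := Vi_bound t x ltac:(lra)). assert (H2 := HDb t Ht).
    assert (Rabs sg = 1) by (destruct Hsg as [->| ->]; unfold Rabs; destruct Rcase_abs; lra).
    rewrite Rabs_mult, H, Rmult_1_l. eapply Rle_trans; [apply Rabs_triang|].
    assert (0 <= Rabs x) by apply Rabs_pos. nra.
  - intros t x. apply (continuity_2d_pt_mult (fun _ _ => sg)). apply continuity_2d_pt_const.
    apply slab_cont.
  - intros t x Ht. apply D_scal. unfold WW.
    eapply D_val; [|apply D_plus; [apply Vi_dt|apply DD_dt]]; try lra. unfold GG. ring.
  - intros t x Ht. apply D_scal. unfold WW. eapply D_val; [|apply D_plus; [apply Vi_dx; lra|apply D_const]]. ring.
  - intros t x Ht. apply D_scal. unfold vv. apply D_minus; [apply Hdx1|apply Hdx2]; lra.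
  - intros t x Ht. unfold Fl, bb, vv. field.
Qed.
End Slab.

Lemma near_T eta Y : 0 < eta -> exists d, 0 < d /\ forall t y, T - d < t <= T -> Rabs y <= Y ->
  Rabs (vv t y) < eta.
Proof.
  intros He.
  assert (He2 : 0 < eta / 2) by lra.
  destruct (unif_cont2 _ T T (- Y) (Rabs Y) Hc1 (eta/2) He2) as [d1 [Hd1 H1]].
  destruct (unif_cont2 _ T T (- Y) (Rabs Y) Hc2 (eta/2) He2) as [d2 [Hd2 H2]].
  exists (Rmin (Rmin d1 d2) T). split. apply Rmin_pos; [apply Rmin_pos|]; auto.
  intros t y Ht Hy.
  assert (Hm1 : Rmin (Rmin d1 d2) T <= Rmin d1 d2) by apply Rmin_l.
  assert (Hm2 : Rmin (Rmin d1 d2) T <= T) by apply Rmin_r.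
  assert (Hm3 : Rmin d1 d2 <= d1) by apply Rmin_l.
  assert (Hm4 : Rmin d1 d2 <= d2) by apply Rmin_r.
  assert (HyY : - Y <= y <= Rabs Y).
  { apply Rabs_le_inv in Hy. assert (Y <= Rabs Y) by apply RRle_abs. lra. }
  assert (Hdt1' : Rabs (t - T) < d1) by (rewrite Rabs_left1 by lra; lra).
  assert (Hdt2' : Rabs (t - T) < d2) by (rewrite Rabs_left1 by lra; lra).
  assert (Hy0 : Rabs (y - y) < d1) by (rewrite Rminus_eq_0, Rabs_R0; auto).
  assert (Hy0' : Rabs (y - y) < d2) by (rewrite Rminus_eq_0, Rabs_R0; auto).
  specialize (H1 T y t y ltac:(lra) HyY Hdt1' Hy0).
  specialize (H2 T y t y ltac:(lra) HyY Hdt2' Hy0').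
  rewrite !clamp_id in H1, H2 by lra.
  unfold vv. rewrite <- (Hterm y) in H2.
  apply Rabs_def2 in H1. apply Rabs_def2 in H2. apply Rabs_def1; lra.
Qed.


Lemma Vi_sign t x sg0 : 0 < t < T -> (sg0 = 1 \/ sg0 = -1) -> sg0 * Vi t x <= 0.
Proof.
  intros Ht Hsg0.
  destruct (Rle_dec (sg0 * Vi t x) 0) as [|Hn]; auto. exfalso.
  set (c := sg0 * Vi t x) in *. apply Rnot_le_lt in Hn.
  assert (HB := B_nn).
  assert (HA : 0 < A) by (destruct (Ha 0); lra).
  assert (Hmup : 0 <= mup A B) by (unfold mup; nra).
  set (K := exp (mup A B * T) * (2 + x ^ 2)).
  assert (HK : 0 < K) by (unfold K; apply Rmult_lt_0_compat; [apply exp_pos|assert (0 <= x^2) by apply pow2_ge_0; lra]).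
  set (eps := c / (4 * K)).
  assert (Heps : 0 < eps) by (unfold eps; apply Rdiv_lt_0_compat; lra).
  set (Y := 2 * B / eps + 1).
  assert (HY : 1 <= Y) by (unfold Y; assert (0 <= 2 * B / eps) by (apply Rmult_le_pos; [lra|left; apply Rinv_0_lt_compat; lra]); lra).
  set (et := c / (3 * (Y + 1))).
  assert (Het : 0 < et) by (unfold et; apply Rdiv_lt_0_compat; lra).
  destruct (near_T et Y Het) as [d [Hd Hnear]].
  set (t2 := (Rmax t (T - d / 2) + T) / 2).
  assert (Hmx1 : t <= Rmax t (T - d/2)) by apply Rmax_l.
  assert (Hmx2 : T - d/2 <= Rmax t (T - d/2)) by apply Rmax_r.
  assert (Hmx3 : Rmax t (T - d/2) < T) by (unfold Rmax; destruct Rle_dec; lra).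
  assert (Ht2 : t < t2 < T) by (unfold t2; lra).
  assert (Ht2d : T - d < t2) by (unfold t2; lra).
  assert (Hend : forall sg y, (sg = 1 \/ sg = -1) -> sg * Vi t2 y - eps * (1 + y ^ 2) <= c / 3).
  { intros sg y Hsg.
    assert (Hsv : sg * Vi t2 y <= Rabs (Vi t2 y)).
    { destruct Hsg as [->| ->]. rewrite Rmult_1_l; apply RRle_abs.
      replace (-1 * Vi t2 y) with (- Vi t2 y) by ring. rewrite <- Rabs_Ropp. apply RRle_abs. }
    assert (0 <= y^2) by apply pow2_ge_0.
    destruct (Rle_dec (Rabs y) Y) as [Hy|Hy].
    - assert (Hb : Rabs (Vi t2 y) <= et * Rabs y).
      { unfold Vi. apply RI_bound. apply exRI; intros; apply vv_cont_x; lra.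
        intros z Hz. left. apply Hnear. lra.
        assert (Rabs z <= Rabs y).
        { unfold Rmin, Rmax in Hz; destruct Rle_dec; unfold Rabs; repeat destruct Rcase_abs; lra. }
        lra. }
      assert (et * Rabs y <= et * Y) by (apply Rmult_le_compat_l; lra).
      assert (et * Y < c / 3).
      { unfold et. apply Rmult_lt_reg_r with (3 * (Y + 1)). lra.
        replace (c / (3 * (Y + 1)) * Y * (3 * (Y + 1))) with (c * Y) by (field; lra).
        replace (c / 3 * (3 * (Y + 1))) with (c * Y + c) by field. lra. }
      assert (0 <= eps * (1 + y^2)) by (apply Rmult_le_pos; lra).
      lra.
    - apply Rnot_le_lt in Hy.
      assert (Hb : Rabs (Vi t2 y) <= 2 * B * Rabs y) by (apply Vi_bound; lra).
      assert (Hq : 2 * B * Rabs y <= eps * (1 + y ^ 2)).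
      { assert (Ry : Rabs y ^ 2 = y ^ 2) by apply pow2_abs.
        assert (2 * B <= eps * Y).
        { unfold Y. replace (eps * (2 * B / eps + 1)) with (2 * B + eps) by (field; lra). lra. }
        assert (2 * B * Rabs y <= eps * Y * Rabs y) by (apply Rmult_le_compat_r; [apply Rabs_pos|lra]).
        assert (eps * Y * Rabs y <= eps * (Rabs y * Rabs y)).
        { replace (eps * Y * Rabs y) with (eps * (Y * Rabs y)) by ring.
          apply Rmult_le_compat_l; [lra|]. apply Rmult_le_compat_r; [apply Rabs_pos|lra]. }
        replace (Rabs y * Rabs y) with (y ^ 2) in * by (rewrite <- Ry; ring). nra. }
      assert (0 < c / 3) by lra. lra. }
  assert (Hup := slab_mp t t2 ltac:(lra) ltac:(lra) ltac:(lra) eps (DD t2 + c / 3) sg0 Heps Hsg0).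
  assert (Hlo := slab_mp t t2 ltac:(lra) ltac:(lra) ltac:(lra) eps (- sg0 * DD t2 + c / 3) (- sg0) Heps).
  assert (Hsg1 : - sg0 = 1 \/ - sg0 = -1) by (destruct Hsg0 as [->| ->]; [right|left]; ring).
  specialize (Hlo Hsg1).
  assert (Hsq : sg0 * sg0 = 1) by (destruct Hsg0 as [->| ->]; ring).
  assert (X1 : forall y, sg0 * WW t2 y - eps * (1 + y ^ 2) <= DD t2 + c / 3 + (sg0 - 1) * DD t2).
  { intros y. unfold WW. assert (H := Hend sg0 y Hsg0). 
    replace (sg0 * (Vi t2 y + DD t2)) with (sg0 * Vi t2 y + sg0 * DD t2) by ring. lra. }
  assert (X2 : forall y, - sg0 * WW t2 y - eps * (1 + y ^ 2) <= - sg0 * DD t2 + c / 3).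
  { intros y. unfold WW. assert (H := Hend (- sg0) y Hsg1).
    replace (- sg0 * (Vi t2 y + DD t2)) with (- sg0 * Vi t2 y + - sg0 * DD t2) by ring. lra. }
  clear Hup.
  assert (Hup := slab_mp t t2 ltac:(lra) ltac:(lra) ltac:(lra) eps (sg0 * DD t2 + c / 3) sg0 Heps Hsg0).
  assert (X1' : forall y, sg0 * WW t2 y - eps * (1 + y ^ 2) <= sg0 * DD t2 + c / 3).
  { intros y. unfold WW. assert (H := Hend sg0 y Hsg0).
    replace (sg0 * (Vi t2 y + DD t2)) with (sg0 * Vi t2 y + sg0 * DD t2) by ring. lra. }
  specialize (Hup X1' t x ltac:(lra)). specialize (Hlo X2 t 0 ltac:(lra)).
  assert (He : exp (mup A B * (t2 - t)) <= exp (mup A B * T)).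
  { destruct (Req_dec (mup A B) 0) as [->|]. rewrite !Rmult_0_l; lra.
    left; apply exp_increasing. apply Rmult_lt_compat_l; lra. }
  unfold WW in Hup, Hlo. rewrite Vi_zero in Hlo.
  assert (Hc : c = sg0 * Vi t x) by reflexivity.
  assert (0 <= x^2) by apply pow2_ge_0.
  assert (E1 : eps * exp (mup A B * (t2 - t)) * (1 + x ^ 2) <= eps * exp (mup A B * T) * (1 + x^2)).
  { apply Rmult_le_compat_r; [lra|]. apply Rmult_le_compat_l; lra. }
  assert (E2 : eps * exp (mup A B * (t2 - t)) * (1 + 0 ^ 2) <= eps * exp (mup A B * T)).
  { simpl. rewrite Rmult_0_l, Rplus_0_r, Rmult_1_r. apply Rmult_le_compat_l; lra. }
  assert (E3 : eps * exp (mup A B * T) * (1 + x^2) + eps * exp (mup A B * T) = c / 4).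
  { unfold eps, K. field. split; [|apply Rgt_not_eq, exp_pos]. assert (0 < 2 + x^2) by lra. lra. }
  nra.
Qed.

Lemma vv_zero_int t x : 0 < t < T -> vv t x = 0.
Proof.
  intros Ht.
  assert (H0 : forall y, Vi t y = 0).
  { intros y. assert (H1 := Vi_sign t y 1 Ht (or_introl eq_refl)).
    assert (H2 := Vi_sign t y (-1) Ht (or_intror eq_refl)). lra. }
  assert (Hd := Vi_dx t x Ht).
  assert (Hd0 : derivable_pt_lim (Vi t) x 0).
  { apply (D_ext (fun _ => 0)). intros; symmetry; auto. apply D_const. }
  exact (uniqueness_limite _ _ _ _ Hd Hd0).
Qed.

Theorem uniq_sol : forall t x, 0 <= t <= T -> th1 t x = th2 t x.
Proof.
  assert (Hint : forall t x, 0 < t < T -> th1 t x = th2 t x).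
  { intros t x Ht. assert (H := vv_zero_int t x Ht). unfold vv in H. lra. }
  intros t x Ht.
  destruct (Req_dec t T) as [->|HtT]; [apply Hterm|].
  destruct (Req_dec t 0) as [->|Ht0]; [|apply Hint; lra].
  set (f := fun s => th1 (clamp 0 T s) x - th2 (clamp 0 T s) x).
  assert (Hc : continuity_pt f 0).
  { apply (cont2_pt_2 (fun s x => th1 (clamp 0 T s) x - th2 (clamp 0 T s) x) 0 x).
    apply continuity_2d_pt_minus; auto. }
  assert (Hf0 : f 0 = th1 0 x - th2 0 x) by (unfold f; rewrite clamp_id; lra).
  destruct (Req_dec (f 0) 0) as [Hz|Hnz]; [lra|exfalso].
  destruct (Hc (Rabs (f 0)) (Rabs_pos_lt _ Hnz)) as [d [Hd Hdd]].
  set (s := Rmin (d/2) (T/2)).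
  assert (Hs : 0 < s < T) by (unfold s, Rmin; destruct Rle_dec; lra).
  assert (Hsd : s < d) by (unfold s, Rmin; destruct Rle_dec; lra).
  assert (Hfs : f s = 0) by (unfold f; rewrite clamp_id by lra; rewrite Hint by lra; ring).
  assert (Hq : Rabs (f s - f 0) < Rabs (f 0)).
  { apply Hdd. split. split; [exact I|lra]. simpl; unfold R_dist; rewrite Rminus_0_r, Rabs_pos_eq; lra. }
  rewrite Hfs, Rminus_0_l, Rabs_Ropp in Hq. lra.
Qed.

End Uniq.

Section HC.
Variable nu : R.
Hypothesis Hnu : 0 < nu.

Definition ell (l : R * R) s x := fst l * x - (fst l) ^ 2 * s / 2 + snd l.
Definition lw (l : R * R) s x := exp (- ell l s x / (2 * nu)).

Fixpoint Sm (L : list (R * R)) (f : R * R -> R) : R :=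
  match L with nil => 0 | l :: L' => f l + Sm L' f end.

Definition Mk k L s x := Sm L (fun l => (fst l) ^ k * lw l s x).

Lemma lw_dx l s x : derivable_pt_lim (fun y => lw l s y) x (- fst l / (2 * nu) * lw l s x).
Proof.
  unfold lw, ell. eapply D_val; [|apply D_exp].
  2:{ apply (D_ext (fun y => (- fst l / (2 * nu)) * y + (- (- (fst l)^2 * s / 2 + snd l) / (2 * nu)))).
      intros; field; lra. apply D_lin. }
  reflexivity.
Qed.

Lemma lw_ds l s x : derivable_pt_lim (fun r => lw l r x) s ((fst l) ^ 2 / (4 * nu) * lw l s x).
Proof.
  unfold lw, ell. eapply D_val; [|apply D_exp].
  2:{ apply (D_ext (fun r => ((fst l)^2 / (4 * nu)) * r + (- (fst l * x + snd l) / (2 * nu)))).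
      intros; field; lra. apply D_lin. }
  reflexivity.
Qed.

Lemma Mk_dx k L s x : derivable_pt_lim (fun y => Mk k L s y) x (- Mk (S k) L s x / (2 * nu)).
Proof.
  unfold Mk. induction L as [|l L IH]; simpl.
  - eapply D_val; [|apply D_const]. field; lra.
  - eapply D_val; [|apply D_plus; [apply D_scal; apply lw_dx|apply IH]].
    cbv beta; simpl; field; lra.
Qed.

Lemma Mk_ds k L s x : derivable_pt_lim (fun r => Mk k L r x) s (Mk (S (S k)) L s x / (4 * nu)).
Proof.
  unfold Mk. induction L as [|l L IH]; simpl.
  - eapply D_val; [|apply D_const]. field; lra.
  - eapply D_val; [|apply D_plus; [apply D_scal; apply lw_ds|apply IH]].
    cbv beta; simpl; field; lra.
Qed.

Lemma Sm_le L f g : (forall l, In l L -> f l <= g l) -> Sm L f <= Sm L g.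
Proof.
  induction L as [|l L IH]; simpl; intros H. lra.
  apply Rplus_le_compat. apply H; auto. apply IH; auto.
Qed.

Lemma Sm_nonneg L f : (forall l, In l L -> 0 <= f l) -> 0 <= Sm L f.
Proof. intros H. apply Rle_trans with (Sm L (fun _ => 0)). clear H; induction L; simpl; lra. apply Sm_le; auto. Qed.

Lemma Sm_ge_term L f l : In l L -> (forall l, In l L -> 0 <= f l) -> f l <= Sm L f.
Proof.
  induction L as [|l' L IH]; simpl; intros Hin H. contradiction.
  destruct Hin as [->|Hin].
  - assert (0 <= Sm L f) by (apply Sm_nonneg; auto). lra.
  - assert (0 <= f l') by auto. assert (f l <= Sm L f) by auto. lra.
Qed.

Lemma Sm_plus L f g : Sm L (fun l => f l + g l) = Sm L f + Sm L g.
Proof. induction L; simpl; [ring|rewrite IHL; ring]. Qed.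
Lemma Sm_scal L c f : Sm L (fun l => c * f l) = c * Sm L f.
Proof. induction L; simpl; [ring|rewrite IHL; ring]. Qed.
Lemma Sm_ext L f g : (forall l, In l L -> f l = g l) -> Sm L f = Sm L g.
Proof. induction L; simpl; intros H; auto. rewrite H, IHL; auto. Qed.
Lemma Sm_opp L f : Sm L (fun l => - f l) = - Sm L f.
Proof. induction L; simpl; [ring|rewrite IHL; ring]. Qed.
Lemma Sm_app L1 L2 f : Sm (L1 ++ L2) f = Sm L1 f + Sm L2 f.
Proof. induction L1; simpl; [ring|rewrite IHL1; ring]. Qed.
Lemma Sm_bound L f b : (forall l, In l L -> f l <= b) -> Sm L f <= INR (length L) * b.
Proof.
  induction L as [|l L IH]; cbn [Sm length]; intros H. simpl; lra.
  rewrite S_INR. assert (f l <= b) by (apply H; left; auto).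
  assert (Sm L f <= INR (length L) * b) by (apply IH; intros; apply H; right; auto). lra.
Qed.

Lemma lw_pos l s x : 0 < lw l s x.
Proof. apply exp_pos. Qed.

Lemma M0_pos L s x : L <> nil -> 0 < Mk 0 L s x.
Proof.
  intros HL. destruct L as [|l L]; [congruence|]. unfold Mk; cbn [Sm].
  assert (0 <= Sm L (fun l => fst l ^ 0 * lw l s x)) by (apply Sm_nonneg; intros; simpl; rewrite Rmult_1_l; left; apply lw_pos).
  assert (0 < fst l ^ 0 * lw l s x) by (simpl; rewrite Rmult_1_l; apply lw_pos). lra.
Qed.

Definition Th L s x := Mk 1 L s x / Mk 0 L s x.
Definition Thx L s x := (Mk 1 L s x ^ 2 - Mk 0 L s x * Mk 2 L s x) / (2 * nu * Mk 0 L s x ^ 2).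
Definition Ths L s x := (Mk 3 L s x * Mk 0 L s x - Mk 1 L s x * Mk 2 L s x) / (4 * nu * Mk 0 L s x ^ 2).
Definition Thxx L s x := (Mk 0 L s x * (Mk 0 L s x * Mk 3 L s x - Mk 1 L s x * Mk 2 L s x)
    + 2 * Mk 1 L s x * (Mk 1 L s x ^ 2 - Mk 0 L s x * Mk 2 L s x)) / (4 * nu ^ 2 * Mk 0 L s x ^ 3).

Section NonNil.
Variable L : list (R * R).
Hypothesis HL : L <> nil.

Lemma Th_dx s x : derivable_pt_lim (fun y => Th L s y) x (Thx L s x).
Proof.
  assert (H0 := M0_pos L s x HL).
  unfold Th, Thx. eapply D_val; [|apply D_div; [lra|apply Mk_dx|apply Mk_dx]].
  field; lra.
Qed.

Lemma Thx_dx s x : derivable_pt_lim (fun y => Thx L s y) x (Thxx L s x).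
Proof.
  assert (H0 := M0_pos L s x HL).
  unfold Thx, Thxx. eapply D_val; [|apply D_div].
  3: apply D_minus; [apply D_sq; apply Mk_dx|apply D_mult; apply Mk_dx].
  3: apply D_scal; apply (D_ext (fun y => Mk 0 L s y * Mk 0 L s y)); [intros; ring|apply D_mult; apply Mk_dx].
  - simpl. field. lra.
  - assert (0 < 2 * nu * Mk 0 L s x ^ 2) by (apply Rmult_lt_0_compat; [lra|apply pow_lt; lra]). lra.
Qed.

Lemma Th_ds s x : derivable_pt_lim (fun r => Th L r x) s (Ths L s x).
Proof.
  assert (H0 := M0_pos L s x HL).
  unfold Th, Ths. eapply D_val; [|apply D_div; [lra|apply Mk_ds|apply Mk_ds]].
  cbv beta. field; lra.
Qed.

Lemma Th_pde s x : Ths L s x + Th L s x * Thx L s x - nu * Thxx L s x = 0.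
Proof.
  assert (H0 := M0_pos L s x HL).
  unfold Ths, Th, Thx, Thxx. field. lra.
Qed.
End NonNil.

Lemma lw_ratio l l' s x : lw l s x / lw l' s x = exp (- (ell l s x - ell l' s x) / (2 * nu)).
Proof.
  unfold lw. unfold Rdiv at 1. rewrite <- exp_Ropp, <- exp_plus. f_equal. field. lra.
Qed.

Lemma M0_ge_term L l s x : In l L -> lw l s x <= Mk 0 L s x.
Proof.
  intros Hin. unfold Mk.
  replace (lw l s x) with (fst l ^ 0 * lw l s x) by (simpl; ring).
  apply (Sm_ge_term L (fun l => fst l ^ 0 * lw l s x) l Hin).
  intros; simpl; rewrite Rmult_1_l; left; apply lw_pos.
Qed.

Lemma Sm_div L f c : 0 < c -> Sm L f / c = Sm L (fun l => f l / c).
Proof. intros Hc. induction L; simpl. unfold Rdiv; ring. rewrite <- IHL. field; lra. Qed.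

Lemma Th_UB L ls s x : In ls L -> fst ls = -1 -> (forall l, In l L -> -1 <= fst l) ->
  Th L s x + 1 <= Sm L (fun l => (fst l + 1) * exp (- (ell l s x - ell ls s x) / (2 * nu))).
Proof.
  intros Hin Hu Hall.
  assert (HL : L <> nil) by (intro; subst; contradiction).
  assert (H0 := M0_pos L s x HL).
  assert (Hge := M0_ge_term L ls s x Hin).
  assert (Hls := lw_pos ls s x).
  replace (Th L s x + 1) with (Sm L (fun l => (fst l + 1) * lw l s x) / Mk 0 L s x).
  2:{ replace (Sm L (fun l => (fst l + 1) * lw l s x)) with (Mk 1 L s x + Mk 0 L s x).
      unfold Th. field; lra. unfold Mk. rewrite <- Sm_plus. apply Sm_ext. intros; simpl; ring. }
  rewrite Sm_div by lra. apply Sm_le. intros l Hl.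
  rewrite <- lw_ratio. assert (0 <= fst l + 1) by (assert (H := Hall l Hl); lra).
  assert (Hlp := lw_pos l s x).
  unfold Rdiv. rewrite <- Rmult_assoc. apply Rmult_le_compat_l. apply Rmult_le_pos; lra.
  apply Rinv_le_contravar; lra.
Qed.

Lemma Th_LB L lk s x : In lk L ->
  fst lk - Sm L (fun l => Rmax 0 (fst lk - fst l) * exp (- (ell l s x - ell lk s x) / (2 * nu))) <= Th L s x.
Proof.
  intros Hin.
  assert (HL : L <> nil) by (intro; subst; contradiction).
  assert (H0 := M0_pos L s x HL).
  assert (Hge := M0_ge_term L lk s x Hin).
  assert (Hlk := lw_pos lk s x).
  assert (E : Th L s x - fst lk = Sm L (fun l => (fst l - fst lk) * lw l s x) / Mk 0 L s x).
  { replace (Sm L (fun l => (fst l - fst lk) * lw l s x)) with (Mk 1 L s x - fst lk * Mk 0 L s x).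
    unfold Th. field; lra. unfold Mk.
    transitivity (Sm L (fun l => fst l ^ 1 * lw l s x + (- fst lk) * (fst l ^ 0 * lw l s x))).
    rewrite Sm_plus, Sm_scal. ring. apply Sm_ext; intros; simpl; ring. }
  cut (- Sm L (fun l => Rmax 0 (fst lk - fst l) * exp (- (ell l s x - ell lk s x) / (2 * nu))) <= Th L s x - fst lk); [lra|].
  rewrite E, Sm_div by lra. rewrite <- Sm_opp.
  apply Sm_le. intros l Hl. rewrite <- lw_ratio.
  assert (Hlp := lw_pos l s x).
  destruct (Rle_dec (fst lk) (fst l)) as [Hle|Hlt].
  - rewrite Rmax_left by lra. 
    assert (0 <= (fst l - fst lk) * lw l s x / Mk 0 L s x).
    { apply Rmult_le_pos. apply Rmult_le_pos; lra. left; apply Rinv_0_lt_compat; lra. }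
    lra.
  - rewrite Rmax_right by lra.
    assert (lw l s x / Mk 0 L s x <= lw l s x / lw lk s x).
    { unfold Rdiv. apply Rmult_le_compat_l; [lra|]. apply Rinv_le_contravar; lra. }
    assert (Hp : 0 < fst lk - fst l) by lra.
    replace ((fst l - fst lk) * lw l s x / Mk 0 L s x) with (- ((fst lk - fst l) * (lw l s x / Mk 0 L s x))) by (field; lra).
    apply Ropp_le_contravar. apply Rmult_le_compat_l; lra.
Qed.

Lemma Mk_bounds L s x : (forall l, In l L -> -1 <= fst l <= 1) ->
  Rabs (Mk 1 L s x) <= Mk 0 L s x /\ 0 <= Mk 2 L s x <= Mk 0 L s x.
Proof.
  intros Hall. unfold Mk. induction L as [|l L IH]; simpl.
  - rewrite Rabs_R0; lra.
  - assert (H1 : forall l0, In l0 L -> -1 <= fst l0 <= 1) by (intros; apply Hall; right; auto).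
    destruct (IH H1) as [IH1 IH2]. simpl in IH1, IH2. assert (Hl := Hall l (or_introl eq_refl)).
    assert (Hlp := lw_pos l s x).
    split.
    + eapply Rle_trans; [apply Rabs_triang|]. rewrite Rabs_mult.
      assert (Rabs (fst l * 1) <= 1) by (rewrite Rmult_1_r; apply Rabs_le; lra).
      rewrite (Rabs_pos_eq (lw l s x)) by lra.
      assert (Rabs (fst l * 1) * lw l s x <= 1 * lw l s x) by (apply Rmult_le_compat_r; lra). lra.
    + assert (0 <= fst l * (fst l * 1) <= 1) by nra. nra.
Qed.

Lemma Th_bound L s x : L <> nil -> (forall l, In l L -> -1 <= fst l <= 1) -> Rabs (Th L s x) <= 1.
Proof.
  intros HL Hall. destruct (Mk_bounds L s x Hall) as [H1 _]. assert (H0 := M0_pos L s x HL).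
  unfold Th. unfold Rdiv. rewrite Rabs_mult, (Rabs_pos_eq (/ _)) by (left; apply Rinv_0_lt_compat; lra).
  apply Rmult_le_reg_r with (Mk 0 L s x); auto. rewrite Rmult_assoc, Rinv_l by lra. lra.
Qed.

Lemma Thx_bound L s x : L <> nil -> (forall l, In l L -> -1 <= fst l <= 1) ->
  - (1 / (2 * nu)) <= Thx L s x <= 1 / (2 * nu).
Proof.
  intros HL Hall. destruct (Mk_bounds L s x Hall) as [H1 H2]. assert (H0 := M0_pos L s x HL).
  assert (Hsq : Mk 1 L s x ^ 2 <= Mk 0 L s x ^ 2).
  { rewrite <- (pow2_abs (Mk 1 L s x)). apply pow_incr. split; [apply Rabs_pos|auto]. }
  assert (0 <= Mk 1 L s x ^ 2) by apply pow2_ge_0.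
  assert (Hd : 0 < 2 * nu * Mk 0 L s x ^ 2) by (apply Rmult_lt_0_compat; [lra|apply pow_lt; lra]).
  unfold Thx. split.
  - replace (- (1 / (2 * nu))) with ((- Mk 0 L s x ^ 2) / (2 * nu * Mk 0 L s x ^ 2)) by (field; lra).
    unfold Rdiv. apply Rmult_le_compat_r; [left; apply Rinv_0_lt_compat; auto|].
    assert (Mk 0 L s x * Mk 2 L s x <= Mk 0 L s x * Mk 0 L s x) by (apply Rmult_le_compat_l; lra).
    simpl in *. lra.
  - replace (1 / (2 * nu)) with ((Mk 0 L s x ^ 2) / (2 * nu * Mk 0 L s x ^ 2)) by (field; lra).
    unfold Rdiv. apply Rmult_le_compat_r; [left; apply Rinv_0_lt_compat; auto|].
    assert (0 <= Mk 0 L s x * Mk 2 L s x) by (apply Rmult_le_pos; lra). lra.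
Qed.

Lemma Thx_LB L l0 s x : In l0 L -> (forall l, In l L -> -1 <= fst l <= 1) ->
  - (1 / (2 * nu)) * Sm L (fun l => (fst l) ^ 2 * exp (- (ell l s x - ell l0 s x) / (2 * nu))) <= Thx L s x.
Proof.
  intros Hin Hall.
  assert (HL : L <> nil) by (intro; subst; contradiction).
  destruct (Mk_bounds L s x Hall) as [H1 H2]. assert (H0 := M0_pos L s x HL).
  assert (Hge := M0_ge_term L l0 s x Hin). assert (Hl0 := lw_pos l0 s x).
  assert (Hd : 0 < 2 * nu * Mk 0 L s x ^ 2) by (apply Rmult_lt_0_compat; [lra|apply pow_lt; lra]).
  assert (S1 : Sm L (fun l => (fst l) ^ 2 * exp (- (ell l s x - ell l0 s x) / (2 * nu))) = Mk 2 L s x / lw l0 s x).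
  { unfold Mk. rewrite Sm_div by lra. apply Sm_ext. intros l _. rewrite <- lw_ratio. unfold Rdiv; ring. }
  rewrite S1.
  assert (Hm : Mk 2 L s x / Mk 0 L s x <= Mk 2 L s x / lw l0 s x).
  { unfold Rdiv. apply Rmult_le_compat_l; [lra|]. apply Rinv_le_contravar; lra. }
  assert (Thx L s x >= - (1 / (2 * nu)) * (Mk 2 L s x / Mk 0 L s x)).
  { unfold Thx. apply Rle_ge.
    replace (- (1 / (2 * nu)) * (Mk 2 L s x / Mk 0 L s x)) with ((- (Mk 0 L s x * Mk 2 L s x)) / (2 * nu * Mk 0 L s x ^ 2)) by (field; lra).
    unfold Rdiv. apply Rmult_le_compat_r; [left; apply Rinv_0_lt_compat; auto|].
    assert (0 <= Mk 1 L s x ^ 2) by apply pow2_ge_0. lra. }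
  assert (0 < 1 / (2 * nu)) by (apply Rdiv_lt_0_compat; lra).
  assert (- (1 / (2 * nu)) * (Mk 2 L s x / lw l0 s x) <= - (1 / (2 * nu)) * (Mk 2 L s x / Mk 0 L s x)).
  { apply Ropp_le_cancel. rewrite <- !Ropp_mult_distr_l, !Ropp_involutive. apply Rmult_le_compat_l; lra. }
  lra.
Qed.

End HC.

Section Barrier.
Variables (nu RR : R) (n : nat).
Hypothesis Hnu : 0 < nu.
Hypothesis HR : 0 < RR.
Hypothesis Hn : (2 <= n)%nat.

Definition qn := / INR n.
Definition jn (j : nat) := INR j * qn.
Definition cR (j : nat) := jn j * (jn j + 2 * qn) * RR / 2.
Definition rl (j : nat) := (- jn j, cR j).
Definition ml (j : nat) := (jn j, cR j).
Definition LL := map rl (seq 0 (S n)) ++ map ml (seq 1 n).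

Lemma INRn_pos : 2 <= INR n.
Proof. replace 2 with (INR 2) by (simpl; ring). apply le_INR; auto. Qed.
Lemma qn_pos : 0 < qn.
Proof. unfold qn. apply Rinv_0_lt_compat. assert (H := INRn_pos). lra. Qed.
Lemma qn_half : qn <= 1/2.
Proof. unfold qn. assert (H := INRn_pos). apply Rle_Rinv in H; [|lra|lra]. lra. Qed.
Lemma jn_n : jn n = 1.
Proof. unfold jn, qn. field. assert (H := INRn_pos). lra. Qed.
Lemma jn_0 : jn 0 = 0.
Proof. unfold jn. simpl. ring. Qed.
Lemma jn_range j : (j <= n)%nat -> 0 <= jn j <= 1.
Proof.
  intros Hj. rewrite <- jn_n. unfold jn. assert (Hq := qn_pos). split.
  apply Rmult_le_pos; [apply pos_INR|lra]. apply Rmult_le_compat_r; [lra|apply le_INR; auto].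
Qed.
Lemma jn_lt j : (j < n)%nat -> jn j <= 1 - qn.
Proof.
  intros Hj. assert (H : INR j <= INR n - 1).
  { replace (INR n - 1) with (INR (n - 1)). apply le_INR; lia. rewrite minus_INR by lia. simpl; ring. }
  unfold jn. assert (Hq := qn_pos). replace (1 - qn) with ((INR n - 1) * qn).
  apply Rmult_le_compat_r; lra. unfold qn. field. assert (H2 := INRn_pos). lra.
Qed.
Lemma jn_ge1 j : (1 <= j)%nat -> qn <= jn j.
Proof.
  intros Hj. unfold jn. assert (Hq := qn_pos). rewrite <- (Rmult_1_l qn) at 1.
  apply Rmult_le_compat_r; [lra|]. replace 1 with (INR 1) by reflexivity. apply le_INR; auto.
Qed.
Lemma jn_step j k : (k < j)%nat -> jn k + qn <= jn j.
Proof.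
  intros H. unfold jn. replace (INR k * qn + qn) with (INR (S k) * qn) by (rewrite S_INR; ring).
  apply Rmult_le_compat_r; [left; apply qn_pos|]. apply le_INR; lia.
Qed.
Lemma cR_n : cR n = (1 + 2 * qn) * RR / 2.
Proof. unfold cR. rewrite jn_n. field. Qed.
Lemma cR_0 : cR 0 = 0.
Proof. unfold cR. rewrite jn_0. field. Qed.

Lemma LL_in l : In l LL -> (exists j, (j <= n)%nat /\ l = rl j) \/ (exists j, (1 <= j <= n)%nat /\ l = ml j).
Proof.
  unfold LL. intros H. apply in_app_or in H. destruct H as [H|H].
  - left. apply in_map_iff in H. destruct H as [j [<- Hj]]. apply in_seq in Hj. exists j; split; [lia|auto].
  - right. apply in_map_iff in H. destruct H as [j [<- Hj]]. apply in_seq in Hj. exists j; split; [lia|auto].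
Qed.
Lemma rl_in j : (j <= n)%nat -> In (rl j) LL.
Proof. intros. unfold LL. apply in_or_app. left. apply in_map. apply in_seq. lia. Qed.
Lemma LL_len : length LL = (2 * n + 1)%nat.
Proof. unfold LL. rewrite length_app, !length_map, !length_seq. lia. Qed.
Lemma LL_nil : LL <> nil.
Proof. intro H. assert (Hl := LL_len). rewrite H in Hl. simpl in Hl. lia. Qed.
Lemma LL_u l : In l LL -> -1 <= fst l <= 1.
Proof.
  intros H. destruct (LL_in l H) as [[j [Hj ->]]|[j [Hj ->]]]; simpl; 
  assert (Hr := jn_range j ltac:(lia)); lra.
Qed.

Lemma M1_zero s : Mk nu 1 LL s 0 = 0.
Proof.
  unfold Mk, LL. rewrite Sm_app. simpl seq. cbn [map]. cbn [Sm].
  unfold rl at 1. simpl fst. rewrite jn_0.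
  assert (H : forall l, Sm (map rl l) (fun l => fst l ^ 1 * lw nu l s 0) + Sm (map ml l) (fun l => fst l ^ 1 * lw nu l s 0) = 0).
  { induction l as [|j l IH]; cbn [map Sm]. ring.
    assert (E : lw nu (rl j) s 0 = lw nu (ml j) s 0) by (unfold lw; apply f_equal; unfold ell, rl, ml; cbn [fst snd]; field; lra).
    assert (F : fst (rl j) ^ 1 * lw nu (rl j) s 0 + fst (ml j) ^ 1 * lw nu (ml j) s 0 = 0).
    { rewrite E. unfold rl, ml; cbn [fst]. ring. }
    lra. }
  specialize (H (seq 1 n)). lra.
Qed.

Lemma Th_zero s : Th nu LL s 0 = 0.
Proof. unfold Th. rewrite M1_zero. unfold Rdiv; ring. Qed.

Definition ls := rl n.

Lemma ls_fst : fst ls = -1.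
Proof. unfold ls, rl; simpl. rewrite jn_n; ring. Qed.

Lemma ell_rl j s x : ell (rl j) s x - ell ls s x = (1 - jn j) * (x - (1 + jn j) * (RR - s) / 2 - RR * qn).
Proof. unfold ell, ls, rl; simpl. rewrite cR_n, jn_n. unfold cR. field. Qed.
Lemma ell_ml j s x : ell (ml j) s x - ell ls s x = (1 + jn j) * x - (1 - jn j) * ((1 + jn j) * (RR - s) / 2 + RR * qn).
Proof. unfold ell, ls, ml, rl; simpl. rewrite cR_n, jn_n. unfold cR. field. Qed.

Lemma exp_mono_bound a b c : 0 <= c -> b <= a -> c * exp (- a / (2 * nu)) <= c * exp (- b / (2 * nu)).
Proof.
  intros Hc Hab. apply Rmult_le_compat_l; auto.
  destruct (Req_dec a b) as [->|]; [lra|]. left. apply exp_increasing.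
  unfold Rdiv. apply Rmult_lt_compat_r. apply Rinv_0_lt_compat; lra. lra.
Qed.

Lemma claimB m0 s x : RR * qn <= m0 / 2 -> 0 < m0 -> 0 <= s -> Rmax (RR - s) 0 + m0 <= x ->
  Th nu LL s x <= -1 + INR (2 * n + 1) * (2 * exp (- (qn * m0 / 2) / (2 * nu))).
Proof.
  intros Hq Hm0 Hs Hx.
  assert (Hmx1 : RR - s <= Rmax (RR - s) 0) by apply Rmax_l.
  assert (Hmx2 : 0 <= Rmax (RR - s) 0) by apply Rmax_r.
  assert (HB := Th_UB nu Hnu LL ls s x (rl_in n (le_n n)) ls_fst (fun l H => proj1 (LL_u l H))).
  rewrite <- LL_len. cut (Sm LL (fun l => (fst l + 1) * exp (- (ell l s x - ell ls s x) / (2 * nu)))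
    <= INR (length LL) * (2 * exp (- (qn * m0 / 2) / (2 * nu)))); [lra|].
  apply Sm_bound. intros l Hl. assert (Hq0 := qn_pos). assert (Hqh := qn_half).
  assert (He := exp_pos (- (qn * m0 / 2) / (2 * nu))).
  destruct (LL_in l Hl) as [[j [Hj ->]]|[j [Hj ->]]].
  - destruct (Nat.eq_dec j n) as [->|Hjn].
    + unfold rl; simpl fst. rewrite jn_n. replace (- 1 + 1) with 0 by ring. lra.
    + assert (Hj' : (j < n)%nat) by lia. assert (HJ := jn_lt j Hj'). assert (HJ0 := jn_range j Hj).
      unfold rl at 1; simpl fst. rewrite ell_rl.
      replace (- jn j + 1) with (1 - jn j) by ring.
      apply Rle_trans with ((1 - jn j) * exp (- (qn * m0 / 2) / (2 * nu))).
      apply exp_mono_bound. lra.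
      { assert (x - (1 + jn j) * (RR - s) / 2 - RR * qn >= m0 / 2).
        { assert ((1 + jn j) * (RR - s) / 2 <= Rmax (RR - s) 0).
          { destruct (Rle_dec 0 (RR - s)). nra. nra. }
          lra. }
        apply Rle_trans with (qn * (x - (1 + jn j) * (RR - s) / 2 - RR * qn)). nra.
        apply Rmult_le_compat_r; lra. }
      nra.
  - assert (HJ0 := jn_range j ltac:(lia)).
    unfold ml at 1; simpl fst. rewrite ell_ml.
    apply Rle_trans with ((jn j + 1) * exp (- (qn * m0 / 2) / (2 * nu))).
    apply exp_mono_bound. lra.
    { assert ((1 - jn j) * ((1 + jn j) * (RR - s) / 2 + RR * qn) <= Rmax (RR - s) 0 + RR * qn).
      { destruct (Rle_dec 0 (RR - s)).
        - assert (0 <= (1 - jn j) * (1 + jn j) <= 1) by nra.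
          assert ((1 - jn j) * ((1 + jn j) * (RR - s) / 2) <= RR - s).
          { replace ((1 - jn j) * ((1 + jn j) * (RR - s) / 2)) with (((1 - jn j) * (1 + jn j) / 2) * (RR - s)) by field.
            rewrite <- (Rmult_1_l (RR - s)) at 2. apply Rmult_le_compat_r; lra. }
          assert ((1 - jn j) * (RR * qn) <= RR * qn).
          { assert (0 <= jn j * (RR * qn)) by (apply Rmult_le_pos; [lra|apply Rmult_le_pos; lra]).
            rewrite Rmult_minus_distr_r, Rmult_1_l. lra. }
          assert (Eq : (1 - jn j) * ((1 + jn j) * (RR - s) / 2 + RR * qn) = (1 - jn j) * ((1 + jn j) * (RR - s) / 2) + (1 - jn j) * (RR * qn)) by field.
          lra.
        - assert ((1 - jn j) * ((1 + jn j) * (RR - s) / 2) <= 0).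
          { replace ((1 - jn j) * ((1 + jn j) * (RR - s) / 2)) with (((1 - jn j) * (1 + jn j) / 2) * (RR - s)) by field.
            assert (0 <= (1 - jn j) * (1 + jn j) / 2) by nra. nra. }
          assert ((1 - jn j) * (RR * qn) <= RR * qn).
          { assert (0 <= jn j * (RR * qn)) by (apply Rmult_le_pos; [lra|apply Rmult_le_pos; lra]).
            rewrite Rmult_minus_distr_r, Rmult_1_l. lra. }
          assert (Eq : (1 - jn j) * ((1 + jn j) * (RR - s) / 2 + RR * qn) = (1 - jn j) * ((1 + jn j) * (RR - s) / 2) + (1 - jn j) * (RR * qn)) by field.
          lra. }
      assert (x <= (1 + jn j) * x) by nra.
      assert (qn * m0 / 2 <= m0 / 2) by nra. lra. }
    nra.
Qed.

Lemma claimC gam s x : RR * qn <= gam / 4 -> 0 < gam -> RR + gam <= s -> 0 <= x ->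
  Th nu LL s x <= -1 + INR (2 * n + 1) * (2 * (exp (- (qn * gam / 4) / (2 * nu)) + exp (- x / nu))).
Proof.
  intros Hq Hg Hs Hx.
  assert (HB := Th_UB nu Hnu LL ls s x (rl_in n (le_n n)) ls_fst (fun l H => proj1 (LL_u l H))).
  rewrite <- LL_len. cut (Sm LL (fun l => (fst l + 1) * exp (- (ell l s x - ell ls s x) / (2 * nu)))
    <= INR (length LL) * (2 * (exp (- (qn * gam / 4) / (2 * nu)) + exp (- x / nu)))); [lra|].
  apply Sm_bound. intros l Hl. assert (Hq0 := qn_pos). assert (Hqh := qn_half).
  assert (He := exp_pos (- (qn * gam / 4) / (2 * nu))).
  assert (He2 := exp_pos (- x / nu)).
  destruct (LL_in l Hl) as [[j [Hj ->]]|[j [Hj ->]]].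
  - destruct (Nat.eq_dec j n) as [->|Hjn].
    + unfold rl; simpl fst. rewrite jn_n. replace (- 1 + 1) with 0 by ring. lra.
    + assert (Hj' : (j < n)%nat) by lia. assert (HJ := jn_lt j Hj'). assert (HJ0 := jn_range j Hj).
      unfold rl at 1; simpl fst. rewrite ell_rl.
      replace (- jn j + 1) with (1 - jn j) by ring.
      apply Rle_trans with ((1 - jn j) * exp (- (qn * gam / 4) / (2 * nu))).
      apply exp_mono_bound. lra.
      { assert (x - (1 + jn j) * (RR - s) / 2 - RR * qn >= gam / 4) by nra.
        apply Rle_trans with (qn * (x - (1 + jn j) * (RR - s) / 2 - RR * qn)). nra.
        apply Rmult_le_compat_r; lra. }
      nra.
  - assert (HJ0 := jn_range j ltac:(lia)).
    unfold ml at 1; simpl fst. rewrite ell_ml.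
    destruct (Nat.eq_dec j n) as [->|Hjn].
    + rewrite jn_n. replace ((1 + 1) * x - (1 - 1) * ((1 + 1) * (RR - s) / 2 + RR * qn)) with (2 * x) by ring.
      replace (- (2 * x) / (2 * nu)) with (- x / nu) by (field; lra). lra.
    + assert (Hj' : (j < n)%nat) by lia. assert (HJ := jn_lt j Hj').
      apply Rle_trans with ((jn j + 1) * exp (- (qn * gam / 4) / (2 * nu))).
      apply exp_mono_bound. lra.
      { assert ((1 + jn j) * (RR - s) / 2 + RR * qn <= - gam / 4) by nra.
        assert (- (1 - jn j) * ((1 + jn j) * (RR - s) / 2 + RR * qn) >= (1 - jn j) * (gam / 4)) by nra.
        assert ((1 - jn j) * (gam / 4) >= qn * (gam / 4)) by nra.
        assert (0 <= (1 + jn j) * x) by nra. lra. }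
      nra.
Qed.


Definition EA := exp (- (RR * qn ^ 2 / 4) / (2 * nu)).

Lemma ell_rl0 y : ell (rl 0) 0 y = 0.
Proof. unfold ell, rl; cbn [fst snd]. rewrite jn_0, cR_0. field. Qed.

Lemma claimA_zone0 x : 0 <= x <= 5 * RR * qn / 4 ->
  INR (2 * n + 1) * (1 / (2 * nu)) * EA <= 1 / RR -> - x / RR <= Th nu LL 0 x.
Proof.
  intros Hx Hc. assert (Hq0 := qn_pos). assert (Hqh := qn_half).
  assert (HEA : 0 < EA) by apply exp_pos.
  assert (Hd : forall y, 0 <= y <= 5 * RR * qn / 4 -> - (1 / RR) <= Thx nu LL 0 y).
  { intros y Hy.
    assert (HL := Thx_LB nu Hnu LL (rl 0) 0 y (rl_in 0 ltac:(lia)) LL_u).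
    rewrite ell_rl0 in HL.
    assert (Hs : Sm LL (fun l => fst l ^ 2 * exp (- (ell l 0 y - 0) / (2 * nu))) <= INR (length LL) * EA).
    { apply Sm_bound. intros l Hl. destruct (LL_in l Hl) as [[j [Hj ->]]|[j [Hj ->]]].
      - destruct (Nat.eq_dec j 0) as [->|Hj0].
        + unfold rl; cbn [fst]. rewrite jn_0. replace ((- 0) ^ 2) with 0 by ring. lra.
        + assert (HJ := jn_range j Hj). assert (HJ1 := jn_ge1 j ltac:(lia)).
          unfold rl at 1; cbn [fst].
          apply Rle_trans with (1 * EA); [|lra].
          apply Rmult_le_compat. apply pow2_ge_0. left; apply exp_pos.
          replace ((- jn j) ^ 2) with (jn j * jn j) by ring. nra.
          unfold EA. destruct (Req_dec (ell (rl j) 0 y - 0) (RR * qn ^ 2 / 4)) as [E|E].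
          rewrite E; lra. left; apply exp_increasing. unfold Rdiv. apply Rmult_lt_compat_r.
          apply Rinv_0_lt_compat; lra.
          assert (ell (rl j) 0 y - 0 >= RR * qn ^ 2 / 4).
          { unfold ell, rl; cbn [fst snd]. unfold cR.
            replace (- jn j * y - (- jn j) ^ 2 * 0 / 2 + jn j * (jn j + 2 * qn) * RR / 2 - 0)
              with (jn j * ((jn j + 2 * qn) * RR / 2 - y)) by field.
            assert ((jn j + 2 * qn) * RR / 2 - y >= RR * qn / 4) by nra.
            assert (jn j * ((jn j + 2 * qn) * RR / 2 - y) >= qn * (RR * qn / 4)) by nra.
            replace (RR * qn ^ 2 / 4) with (qn * (RR * qn / 4)) by field. lra. }
          lra.
      - assert (HJ := jn_range j ltac:(lia)). assert (HJ1 := jn_ge1 j ltac:(lia)).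
        unfold ml at 1; cbn [fst].
        apply Rle_trans with (1 * EA); [|lra].
        apply Rmult_le_compat. apply pow2_ge_0. left; apply exp_pos.
        replace (jn j ^ 2) with (jn j * jn j) by ring. nra.
        unfold EA. destruct (Req_dec (ell (ml j) 0 y - 0) (RR * qn ^ 2 / 4)) as [E|E].
        rewrite E; lra. left; apply exp_increasing. unfold Rdiv. apply Rmult_lt_compat_r.
        apply Rinv_0_lt_compat; lra.
        assert (ell (ml j) 0 y - 0 >= RR * qn ^ 2 / 4).
        { unfold ell, ml; cbn [fst snd]. unfold cR.
          replace (jn j * y - jn j ^ 2 * 0 / 2 + jn j * (jn j + 2 * qn) * RR / 2 - 0)
            with (jn j * y + jn j * ((jn j + 2 * qn) * RR / 2)) by field.
          assert (0 <= jn j * y) by nra.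
          assert ((jn j + 2 * qn) * RR / 2 >= RR * qn / 4) by nra.
          assert (jn j * ((jn j + 2 * qn) * RR / 2) >= qn * (RR * qn / 4)) by nra.
          replace (RR * qn ^ 2 / 4) with (qn * (RR * qn / 4)) by field. lra. }
        lra. }
    rewrite LL_len in Hs.
    assert (0 < 1 / (2 * nu)) by (apply Rdiv_lt_0_compat; lra).
    assert (- (1 / (2 * nu)) * (INR (2 * n + 1) * EA) <= - (1 / (2 * nu)) * Sm LL (fun l => fst l ^ 2 * exp (- (ell l 0 y - 0) / (2 * nu)))).
    { apply Ropp_le_cancel. rewrite <- !Ropp_mult_distr_l, !Ropp_involutive. apply Rmult_le_compat_l; lra. }
    assert (INR (2 * n + 1) * (1 / (2 * nu)) * EA = 1 / (2 * nu) * (INR (2 * n + 1) * EA)) by ring.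
    lra. }
  destruct (Req_dec x 0) as [->|Hx0].
  - rewrite Th_zero. unfold Rdiv; lra.
  - destruct (MVT_cor2 (fun y => Th nu LL 0 y) (fun y => Thx nu LL 0 y) 0 x) as [c [Hc1 Hc2]].
    lra. intros; apply Th_dx; auto. apply LL_nil.
    rewrite Th_zero in Hc1. assert (H := Hd c ltac:(lra)).
    assert (Thx nu LL 0 c * (x - 0) >= - (1 / RR) * x) by nra.
    unfold Rdiv in *. lra.
Qed.

Lemma claimA_zonek k x : (1 <= k <= n - 1)%nat ->
  (INR k + 1/4) * RR * qn <= x <= (INR k + 5/4) * RR * qn ->
  INR (2 * n + 1) * (2 * EA) <= qn / 4 -> - x / RR <= Th nu LL 0 x.
Proof.
  intros Hk Hx Hc. assert (Hq0 := qn_pos). assert (Hqh := qn_half).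
  assert (HEA : 0 < EA) by apply exp_pos.
  assert (Hkn : (k <= n)%nat) by lia.
  assert (HL := Th_LB nu Hnu LL (rl k) 0 x (rl_in k Hkn)).
  assert (Hs : Sm LL (fun l => Rmax 0 (fst (rl k) - fst l) * exp (- (ell l 0 x - ell (rl k) 0 x) / (2 * nu))) <= INR (length LL) * (2 * EA)).
  { apply Sm_bound. intros l Hl. unfold rl at 1; cbn [fst].
    assert (HK := jn_range k Hkn).
    destruct (LL_in l Hl) as [[j [Hj ->]]|[j [Hj ->]]].
    - assert (HJ := jn_range j Hj). unfold rl at 1; cbn [fst].
      destruct (Compare_dec.le_lt_dec j k) as [Hjk|Hjk].
      + assert (jn j <= jn k) by (unfold jn; apply Rmult_le_compat_r; [lra|apply le_INR; auto]).
        rewrite Rmax_left by lra. rewrite Rmult_0_l. lra.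
      + assert (Hst := jn_step j k Hjk).
        rewrite Rmax_right by lra.
        apply Rle_trans with (2 * EA); [|lra].
        apply Rmult_le_compat. lra. left; apply exp_pos. lra.
        unfold EA. destruct (Req_dec (ell (rl j) 0 x - ell (rl k) 0 x) (RR * qn ^ 2 / 4)) as [E|E].
        rewrite E; lra. left; apply exp_increasing. unfold Rdiv. apply Rmult_lt_compat_r.
        apply Rinv_0_lt_compat; lra.
        assert (ell (rl j) 0 x - ell (rl k) 0 x >= RR * qn ^ 2 / 4).
        { unfold ell, rl; cbn [fst snd]. unfold cR.
          replace (- jn j * x - (- jn j) ^ 2 * 0 / 2 + jn j * (jn j + 2 * qn) * RR / 2 -
                    (- jn k * x - (- jn k) ^ 2 * 0 / 2 + jn k * (jn k + 2 * qn) * RR / 2))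
            with ((jn j - jn k) * ((jn j + jn k + 2 * qn) * RR / 2 - x)) by field.
          assert (Hkq : jn k = INR k * qn) by reflexivity.
          assert ((jn j + jn k + 2 * qn) * RR / 2 - x >= RR * qn / 4) by nra.
          assert ((jn j - jn k) * ((jn j + jn k + 2 * qn) * RR / 2 - x) >= qn * (RR * qn / 4)) by nra.
          replace (RR * qn ^ 2 / 4) with (qn * (RR * qn / 4)) by field. lra. }
        lra.
    - assert (HJ := jn_range j ltac:(lia)). unfold ml at 1; cbn [fst].
      rewrite Rmax_left by lra. rewrite Rmult_0_l. lra. }
  rewrite LL_len in Hs. unfold rl in HL at 1; cbn [fst] in HL.
  assert (Hkq : jn k = INR k * qn) by reflexivity.
  assert (- x / RR <= - jn k - qn / 4).
  { apply Rmult_le_reg_r with RR; auto. unfold Rdiv.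
    replace (- x * / RR * RR) with (- x) by (field; lra). nra. }
  lra.
Qed.

Lemma claimA x : 0 <= x <= RR ->
  INR (2 * n + 1) * (1 / (2 * nu)) * EA <= 1 / RR ->
  INR (2 * n + 1) * (2 * EA) <= qn / 4 -> - x / RR <= Th nu LL 0 x.
Proof.
  intros Hx Hc1 Hc2. assert (Hq0 := qn_pos).
  destruct (Rle_dec x (5 * RR * qn / 4)) as [Hs|Hs].
  - apply claimA_zone0; auto. lra.
  - apply Rnot_le_lt in Hs.
    set (z := x / (RR * qn) - 1/4).
    assert (HRq : 0 < RR * qn) by (apply Rmult_lt_0_compat; lra).
    assert (Hz1 : 1 <= z).
    { unfold z. apply Rmult_le_reg_r with (RR * qn); auto.
      replace ((x / (RR * qn) - 1 / 4) * (RR * qn)) with (x - RR * qn / 4) by (field; lra).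
      assert (5 * RR * qn / 4 = RR * qn + RR * qn / 4) by field. lra. }
    destruct (nat_floor z ltac:(lra)) as [k [Hk1 Hk2]].
    assert (Hnq : INR n * qn = 1) by (unfold qn; field; assert (H := INRn_pos); lra).
    assert (Hzn : z < INR n).
    { unfold z. assert (x / (RR * qn) <= INR n).
      { apply Rmult_le_reg_r with (RR * qn); auto.
        replace (x / (RR * qn) * (RR * qn)) with x by (field; lra).
        replace (INR n * (RR * qn)) with (RR * (INR n * qn)) by ring. rewrite Hnq. lra. }
      lra. }
    assert (Hk1' : (1 <= k)%nat).
    { destruct k. simpl in Hk2. lra. lia. }
    assert (Hkn : (k <= n - 1)%nat).
    { assert (INR k < INR n) by lra. apply INR_lt in H. lia. }
    apply (claimA_zonek k); auto.
    assert (Ex : x = (z + 1/4) * RR * qn) by (unfold z; field; lra).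
    split; rewrite Ex; apply Rmult_le_compat_r; try lra; apply Rmult_le_compat_r; lra.
Qed.

End Barrier.

Lemma cont_on2_clamp f T : 0 <= T -> cont_on2 f (fun t _ => 0 <= t <= T) ->
  forall t x, continuity_2d_pt (fun t x => f (clamp 0 T t) x) t x.
Proof.
  intros HT Hf t x eps.
  destruct (Hf (clamp 0 T t) x (clamp_in 0 T t HT) eps (cond_pos eps)) as [d [Hd Hdd]].
  exists (mkposreal d Hd). intros u v Hu Hv. simpl in *.
  apply Hdd. apply clamp_in; auto.
  eapply Rle_lt_trans; [apply clamp_lip; auto|auto]. auto.
Qed.

Lemma cont_on2_int f T t x : cont_on2 f (fun t _ => 0 <= t < T) -> 0 < t < T ->
  continuity_2d_pt f t x.
Proof.
  intros Hf Ht eps.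
  destruct (Hf t x ltac:(lra) eps (cond_pos eps)) as [d [Hd Hdd]].
  assert (Hm : 0 < Rmin d (Rmin t (T - t))) by (repeat apply Rmin_pos; lra).
  exists (mkposreal _ Hm). intros u v Hu Hv. simpl in *.
  assert (Rmin d (Rmin t (T - t)) <= d) by apply Rmin_l.
  assert (Rmin d (Rmin t (T - t)) <= Rmin t (T - t)) by apply Rmin_r.
  assert (Rmin t (T - t) <= t) by apply Rmin_l. assert (Rmin t (T - t) <= T - t) by apply Rmin_r.
  apply Rabs_def2 in Hu.
  apply Hdd; try lra. apply Rabs_def1; lra.
Qed.

Lemma cont2_negx f t x : continuity_2d_pt f t (- x) -> continuity_2d_pt (fun t x => f t (- x)) t x.
Proof.
  intros H eps. destruct (H eps) as [d Hd]. exists d. intros u v Hu Hv.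
  apply Hd; auto. replace (- v - - x) with (- (v - x)) by ring. rewrite Rabs_Ropp; auto.
Qed.

Lemma D_negx f x l : derivable_pt_lim f (- x) l -> derivable_pt_lim (fun y => f (- y)) x (- l).
Proof.
  intros H. assert (H2 := derivable_pt_lim_comp (fun y => - y) f x (-1) l).
  eapply D_val; [|apply H2]. ring. eapply D_val; [|apply D_opp; apply D_id]. ring. auto.
Qed.

Lemma Rmax0 y : Rmax y 0 = (y + Rabs y) / 2.
Proof. unfold Rmax, Rabs; destruct Rle_dec; destruct Rcase_abs; lra. Qed.

Lemma small_nu c K tau : 0 < c -> 0 <= K -> 0 < tau -> exists nu0, 0 < nu0 <= 1 /\
  forall nu, 0 < nu < nu0 -> K * (1 / nu) * exp (- c / (2 * nu)) <= tau /\ K * exp (- c / (2 * nu)) <= tau.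
Proof.
  intros Hc HK Ht.
  set (nu0 := Rmin 1 (tau * c ^ 2 / (16 * K + 1))).
  assert (Hn0 : 0 < nu0) by (unfold nu0; apply Rmin_pos; [lra|]; apply Rdiv_lt_0_compat; [apply Rmult_lt_0_compat; [lra|apply pow_lt; lra]|lra]).
  exists nu0. split. split; auto. apply Rmin_l.
  intros nu Hnu.
  assert (Hn1 : nu < 1) by (assert (nu0 <= 1) by apply Rmin_l; lra).
  assert (Hn2 : nu < tau * c ^ 2 / (16 * K + 1)) by (assert (nu0 <= tau * c ^ 2 / (16 * K + 1)) by apply Rmin_r; lra).
  set (y := c / (2 * nu)).
  assert (Hy : 0 < y) by (unfold y; apply Rdiv_lt_0_compat; lra).
  assert (Hey : y ^ 2 / 4 <= exp y).
  { replace y with (y/2 + y/2) at 2 by field. rewrite exp_plus.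
    assert (1 + y / 2 <= exp (y/2)).
    { destruct (Req_dec (y/2) 0). lra. left. apply exp_ineq1. lra. }
    assert (0 <= 1 + y/2) by lra. nra. }
  assert (Hexp : exp (- c / (2 * nu)) <= 16 * nu ^ 2 / c ^ 2).
  { replace (- c / (2 * nu)) with (- y) by (unfold y; field; lra). rewrite exp_Ropp.
    assert (0 < y ^ 2 / 4) by (apply Rdiv_lt_0_compat; [apply pow_lt|]; lra).
    apply Rle_trans with (/ (y ^ 2 / 4)). apply Rinv_le_contravar; auto.
    right. unfold y. field. split; lra. }
  assert (He0 := exp_pos (- c / (2 * nu))).
  assert (K1 : K * (1 / nu) * exp (- c / (2 * nu)) <= 16 * K * nu / c ^ 2).
  { apply Rle_trans with (K * (1 / nu) * (16 * nu ^ 2 / c ^ 2)).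
    apply Rmult_le_compat_l; auto. apply Rmult_le_pos; auto. left; apply Rdiv_lt_0_compat; lra.
    right. field. split; lra. }
  assert (K2 : 16 * K * nu / c ^ 2 <= tau).
  { assert (Hc2 : 0 < c ^ 2) by (apply pow_lt; lra).
    apply Rmult_le_reg_r with (c ^ 2); auto. unfold Rdiv. rewrite Rmult_assoc, Rinv_l by lra.
    assert (nu * (16 * K + 1) < tau * c ^ 2).
    { apply Rmult_lt_reg_r with (/ (16 * K + 1)). apply Rinv_0_lt_compat; lra.
      rewrite Rmult_assoc, Rinv_r by lra. unfold Rdiv in Hn2. lra. }
    nra. }
  split. lra.
  assert (K * exp (- c / (2 * nu)) <= K * (1 / nu) * exp (- c / (2 * nu))).
  { rewrite Rmult_assoc. apply Rmult_le_compat_l; auto.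
    rewrite <- (Rmult_1_l (exp _)) at 1. apply Rmult_le_compat_r; [lra|].
    unfold Rdiv. rewrite Rmult_1_l. rewrite <- Rinv_1. apply Rinv_le_contravar; lra. }
  lra.
Qed.

Section Sol.
Variables (T kappa delta : R) (eta : R -> R).
Hypothesis HT : 0 < T.
Hypothesis Hdelta : 0 < delta < T.
Hypothesis Heta : is_eta T kappa eta.

Definition RD := rt T kappa eta delta.

Lemma RD_pos : 0 < RD.
Proof. unfold RD. rewrite <- (rt_T T kappa eta). apply rt_decr; auto. lra. Qed.

Lemma rfun_delta : r_fun T kappa eta delta = RD.
Proof. unfold RD. apply r_eq; auto. lra. Qed.

Lemma g_odd x : g_fun T kappa delta eta (- x) = - g_fun T kappa delta eta x.
Proof.
  unfold g_fun. rewrite Rabs_Ropp. assert (H := RD_pos). rewrite rfun_delta.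
  destruct (Rle_dec (Rabs x) RD). field; lra.
  destruct (Rlt_dec 0 (- x)); destruct (Rlt_dec 0 x); try lra.
  exfalso. assert (x = 0) by lra. subst. rewrite Rabs_R0 in n. lra.
Qed.

Lemma g_bound x : Rabs (g_fun T kappa delta eta x) <= 1.
Proof.
  unfold g_fun. rewrite rfun_delta. assert (H := RD_pos).
  destruct (Rle_dec (Rabs x) RD).
  - unfold Rdiv. rewrite Rabs_mult, Rabs_Ropp, (Rabs_pos_eq (/ RD)) by (left; apply Rinv_0_lt_compat; lra).
    apply Rmult_le_reg_r with RD; auto. rewrite Rmult_assoc, Rinv_l by lra. lra.
  - destruct Rlt_dec; unfold Rabs; destruct Rcase_abs; lra.
Qed.

Variable s0 : R.
Hypothesis Hs0 : 0 < s0 < 1.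
Variable th : R -> R -> R.
Hypothesis Hsol : is_bounded_classical_solution T kappa delta eta s0 th.

Record Unpacked := { uB : R; udt : R -> R -> R; udx : R -> R -> R; udxx : R -> R -> R }.

Definition unpack_prop (B : R) (dt dx dxx : R -> R -> R) (th : R -> R -> R) : Prop :=
  (forall t x, 0 <= t <= T -> Rabs (th t x) <= B) /\
  (forall t x, continuity_2d_pt (fun t x => th (clamp 0 T t) x) t x) /\
  (forall t x, 0 < t < T -> continuity_2d_pt dt t x) /\
  (forall t x, 0 < t < T -> continuity_2d_pt dx t x) /\
  (forall t x, 0 < t < T -> continuity_2d_pt dxx t x) /\
  (forall t x, 0 < t < T -> derivable_pt_lim (fun s => th s x) t (dt t x)) /\
  (forall t x, 0 < t < T -> derivable_pt_lim (fun y => th t y) x (dx t x)) /\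
  (forall t x, 0 < t < T -> derivable_pt_lim (fun y => dx t y) x (dxx t x)) /\
  (forall t x, 0 < t < T -> dt t x - aa T kappa eta t * th t x * dx t x + / 2 * s0 ^ 2 * aa T kappa eta t * dxx t x = 0) /\
  (forall x, th T x = g_fun T kappa delta eta x).

Lemma unpack : exists B dt dx dxx, 0 <= B /\ unpack_prop B dt dx dxx th.
Proof.
  destruct Hsol as [[M HM] [Hc [[dt [dx [dxx [C1 [C2 [C3 [D1 [D2 [D3 P]]]]]]]]] Hg]]].
  exists M, dt, dx, dxx. split.
  { eapply Rle_trans; [apply Rabs_pos|apply (HM 0 0)]; lra. }
  repeat split; auto.
  - apply cont_on2_clamp; auto; lra.
  - intros; apply cont_on2_int with T; auto.
  - intros; apply cont_on2_int with T; auto.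
  - intros; apply cont_on2_int with T; auto.
  - intros; apply D2; lra.
  - intros; apply D3; lra.
  - intros t x Ht. rewrite <- (a_eq T kappa eta HT Heta t) by lra. apply P; lra.
Qed.

Lemma unpack_refl B dt dx dxx : unpack_prop B dt dx dxx th ->
  unpack_prop B (fun t x => - dt t (- x)) (fun t x => dx t (- x)) (fun t x => - dxx t (- x))
    (fun t x => - th t (- x)).
Proof.
  intros [H1 [H2 [H3 [H4 [H5 [H6 [H7 [H8 [H9 H10]]]]]]]]].
  repeat split.
  - intros; rewrite Rabs_Ropp; auto.
  - intros t x. apply continuity_2d_pt_opp. apply (cont2_negx (fun t x => th (clamp 0 T t) x)). auto.
  - intros t x Ht. apply continuity_2d_pt_opp. apply (cont2_negx dt). auto.
  - intros t x Ht. apply (cont2_negx dx). auto.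
  - intros t x Ht. apply continuity_2d_pt_opp. apply (cont2_negx dxx). auto.
  - intros t x Ht. apply D_opp. auto.
  - intros t x Ht. eapply D_val; [|apply D_opp; apply D_negx; apply H7; auto]. ring.
  - intros t x Ht. apply D_negx. apply H8; auto.
  - intros t x Ht. specialize (H9 t (- x) Ht). lra.
  - intros x. rewrite H10. rewrite g_odd. ring.
Qed.

End Sol.

Section Main2.
Variables (T kappa delta : R) (eta : R -> R).
Hypothesis HT : 0 < T.
Hypothesis Hdelta : 0 < delta < T.
Hypothesis Heta : is_eta T kappa eta.
Variable s0 : R.
Hypothesis Hs0 : 0 < s0 < 1.
Variables (th dt dx dxx : R -> R -> R) (B : R).
Hypothesis HB : 0 <= B.
Hypothesis Hu : unpack_prop T kappa delta eta s0 B dt dx dxx th.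

Lemma s2_range : 0 <= s0 ^ 2 <= 1.
Proof. split. apply pow2_ge_0. simpl. nra. Qed.

Lemma odd_sol : forall t x, 0 <= t <= T -> th t (- x) = - th t x.
Proof.
  destruct (aa_bound T kappa eta HT Heta) as [A HA].
  assert (Hr := unpack_refl T kappa delta eta HT Hdelta Heta s0 th B dt dx dxx Hu).
  destruct Hu as [H1 [H2 [H3 [H4 [H5 [H6 [H7 [H8 [H9 H10]]]]]]]]].
  destruct Hr as [R1 [R2 [R3 [R4 [R5 [R6 [R7 [R8 [R9 R10]]]]]]]]].
  assert (Hs2 := s2_range).
  assert (Hac := aa_cont T kappa eta HT Heta).
  intros t x Ht.
  assert (E' : forall t x, 0 <= t <= T -> th t x = (fun t x => - th t (- x)) t x).
  { eapply (uniq_sol T A B (s0 ^ 2) (aa T kappa eta) th dt dx dxx (fun t x => - th t (- x))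
       (fun t x => - dt t (- x)) (fun t x => dx t (- x)) (fun t x => - dxx t (- x))); eauto.
    intros y. rewrite H10, R10. reflexivity. }
  assert (E := E' t (- x) Ht). simpl in E. rewrite Ropp_involutive in E. exact E.
Qed.

Lemma th_le1 : forall t x, 0 <= t <= T -> th t x <= 1.
Proof.
  destruct (aa_bound T kappa eta HT Heta) as [A HA].
  destruct Hu as [H1 [H2 [H3 [H4 [H5 [H6 [H7 [H8 [H9 H10]]]]]]]]].
  assert (Hs2 := s2_range).
  intros t x Ht.
  apply (cmp_full T A (Rmax B 1) 0 (s0 ^ 2) (aa T kappa eta) th (fun _ _ => 1) dt dx dxx
     (fun _ _ => 0) (fun _ _ => 0) (fun _ _ => 0)); auto; try lra.
  all: first [ intros; eapply Rle_trans; [apply H1; auto|apply Rmax_l]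
             | intros; rewrite Rabs_R1; apply Rmax_r
             | intros; apply continuity_2d_pt_const
             | intros; apply D_const
             | intros; lra
             | intros y; rewrite H10; assert (Hg := g_bound T kappa delta eta HT Hdelta Heta y);
               apply Rabs_le_inv in Hg; lra ].
Qed.

Lemma th_gem1 : forall t x, 0 <= t <= T -> -1 <= th t x.
Proof.
  intros t x Ht. assert (H := th_le1 t (- x) Ht). rewrite odd_sol in H; auto. lra.
Qed.

Lemma th_zero : forall t, 0 <= t <= T -> th t 0 = 0.
Proof. intros t Ht. assert (H := odd_sol t 0 Ht). rewrite Ropp_0 in H. lra. Qed.

End Main2.

Section Main3.
Variables (T kappa delta : R) (eta : R -> R).
Hypothesis HT : 0 < T.
Hypothesis Hdelta : 0 < delta < T.
Hypothesis Heta : is_eta T kappa eta.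
Variable s0 : R.
Hypothesis Hs0 : 0 < s0 < 1.
Variables (th dt dx dxx : R -> R -> R) (B : R).
Hypothesis HB : 0 <= B.
Hypothesis Hu : unpack_prop T kappa delta eta s0 B dt dx dxx th.
Variable n : nat.
Hypothesis Hn : (2 <= n)%nat.

Definition nuu := s0 ^ 2 / 2.
Lemma nuu_pos : 0 < nuu.
Proof. unfold nuu. assert (0 < s0 ^ 2) by (apply pow_lt; lra). lra. Qed.

Definition Bar t x := Th nuu (LL (RD T kappa delta eta) n) (rt T kappa eta t) x.

Hypothesis HA1 : INR (2 * n + 1) * (1 / (2 * nuu)) * EA nuu (RD T kappa delta eta) n <= 1 / RD T kappa delta eta.
Hypothesis HA2 : INR (2 * n + 1) * (2 * EA nuu (RD T kappa delta eta) n) <= qn n / 4.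

Lemma th_le_bar : forall t x, 0 <= t <= T -> 0 <= x -> th t x <= Bar t x.
Proof.
  destruct (aa_bound T kappa eta HT Heta) as [A HA].
  assert (Hs2 := s2_range s0 Hs0).
  assert (Hnu := nuu_pos).
  assert (HR := RD_pos T kappa delta eta HT Hdelta Heta).
  set (RR := RD T kappa delta eta) in *.
  set (L := LL RR n).
  assert (HLn : L <> nil) by apply (LL_nil RR n Hn).
  assert (HLu : forall l, In l L -> -1 <= fst l <= 1) by apply (LL_u RR n Hn).
  assert (Hth0 : forall t, 0 <= t <= T -> th t 0 = 0) by (eapply th_zero; eauto).
  destruct Hu as [H1 [H2 [H3 [H4 [H5 [H6 [H7 [H8 [H9 H10]]]]]]]]].
  cut (forall t x, 0 <= t <= T -> 0 <= x -> th t x <= Bar t x); [intros HH; exact HH|].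
  eapply (cmp_half T A (Rmax B 1) (1 / (2 * nuu)) (s0 ^ 2) (aa T kappa eta) th Bar dt dx dxx
     (fun t x => Ths nuu L (rt T kappa eta t) x * (- aa T kappa eta t))
     (fun t x => Thx nuu L (rt T kappa eta t) x)
     (fun t x => Thxx nuu L (rt T kappa eta t) x)); auto.
  - left; apply Rdiv_lt_0_compat; lra.
  - intros; eapply Rle_trans; [apply H1; auto|apply Rmax_l].
  - intros; eapply Rle_trans; [apply Th_bound; auto|apply Rmax_r].
  - apply (cont2_lip _ (fun t x => Thx nuu L (rt T kappa eta (clamp 0 T t)) x) (1 / (2 * nuu))).
    + intros t' x'. apply Th_dx; auto.
    + intros t' x'. destruct (Thx_bound nuu Hnu L (rt T kappa eta (clamp 0 T t')) x' HLn HLu). apply Rabs_le. lra.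
    + intros t' x'. apply (continuity_pt_comp (fun t => rt T kappa eta (clamp 0 T t)) (fun s => Th nuu L s x')).
      apply (continuity_pt_comp (clamp 0 T) (rt T kappa eta)).
      { intros eps Heps. exists eps. split; auto. intros y [_ Hy]. simpl in *. unfold R_dist in *.
        eapply Rle_lt_trans; [apply clamp_lip; lra|auto]. }
      apply rt_cont; auto.
      eapply C_of_D. apply Th_ds; auto.
  - intros t' x' Ht'. unfold Bar.
    apply (derivable_pt_lim_comp (rt T kappa eta) (fun s => Th nuu L s x')).
    apply rt_deriv; auto. apply Th_ds; auto.
  - intros t' x' Ht'. apply Th_dx; auto.
  - intros t' x' Ht'. apply Thx_dx; auto.
  - intros t' x' Ht'.
    assert (P := Th_pde nuu Hnu L HLn (rt T kappa eta t') x').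
    change (Bar t' x') with (Th nuu L (rt T kappa eta t') x').
    replace (/ 2 * s0 ^ 2) with nuu by (unfold nuu; field).
    set (a1 := aa T kappa eta t') in *. set (S1 := Ths nuu L (rt T kappa eta t') x') in *.
    set (P1 := Th nuu L (rt T kappa eta t') x') in *. set (X1 := Thx nuu L (rt T kappa eta t') x') in *.
    set (XX1 := Thxx nuu L (rt T kappa eta t') x') in *.
    assert (E : S1 * - a1 - a1 * P1 * X1 + nuu * a1 * XX1 = - a1 * (S1 + P1 * X1 - nuu * XX1)) by ring.
    rewrite E, P. lra.
  - intros t' x' Ht'. destruct (Thx_bound nuu Hnu L (rt T kappa eta t') x' HLn HLu). lra.
  - intros y Hy. rewrite H10. unfold Bar. rewrite rt_T.
    unfold g_fun. rewrite (rfun_delta T kappa delta eta HT Hdelta Heta). fold RR. fold L.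
    destruct (Rle_dec (Rabs y) RR) as [Hy'|Hy'].
    + rewrite Rabs_pos_eq in Hy' by lra. apply (claimA nuu RR n Hnu HR Hn y); auto.
    + assert (Hb := Th_bound nuu L 0 y HLn HLu). apply Rabs_le_inv in Hb.
      destruct Rlt_dec; [lra|]. exfalso. rewrite Rabs_pos_eq in Hy' by lra. lra.
  - intros t' Ht'. unfold Bar. rewrite Hth0 by auto. fold L. rewrite Th_zero; auto. lra.
Qed.

End Main3.

Lemma ent_eq T kappa delta eta psi t x (Hd : 0 < delta) :
  forall a0 : R, (forall t, 0 <= t -> a0 < t <= T -> psi t > Rmax (r_fun T kappa eta delta - r_fun T kappa eta t) 0) ->
  a0 < delta -> 0 <= t <= T -> psi t <= Rabs x ->
  theta_entropy T kappa delta eta t x = msign x.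
Proof.
  intros a0 Ha0 Ha0d Ht Hx. unfold theta_entropy.
  destruct (Rle_dec t delta) as [|Htd]; auto.
  destruct (Rle_dec (r_fun T kappa eta delta - r_fun T kappa eta t) (Rabs x)) as [|Hn]; auto.
  exfalso. assert (H := Ha0 t ltac:(lra) ltac:(lra)).
  assert (Rmax (r_fun T kappa eta delta - r_fun T kappa eta t) 0 >= r_fun T kappa eta delta - r_fun T kappa eta t)
    by (apply Rle_ge, Rmax_l). lra.
Qed.

Theorem mainTheorem6
  (T kappa delta : R) (HT : 0 < T) (Hdelta : 0 < delta < T)
  (eta : R -> R) (Heta : is_eta T kappa eta)
  (thetas : R -> R -> R -> R)
  (Hthetas : forall s0, 0 < s0 < 1 ->
     is_bounded_classical_solution T kappa delta eta s0 (thetas s0))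
  (psi : R -> R) (Hpsi : admissible T kappa delta eta psi)
  (L : R -> R) (HLpos : forall s, 0 < s -> 0 < L s)
  (HLlim : forall M, exists d, 0 < d /\ forall s, 0 < s < d -> M < L s) :
  forall eps, 0 < eps -> exists d, 0 < d /\
    forall s0, 0 < s0 < 1 -> s0 < d ->
      forall t x, 0 <= t <= T -> s0 ^ 2 * L s0 + psi t <= Rabs x ->
        Rabs (thetas s0 t x - theta_entropy T kappa delta eta t x) <= eps.
Proof.
  intros eps Heps.
  assert (HR := RD_pos T kappa delta eta HT Hdelta Heta).
  set (RR := RD T kappa delta eta) in *.
  destruct Hpsi as [Hpc [Hpnn [Hpmono [a0 [Ha0d Hpa]]]]].
  set (rr := rt T kappa eta).
  assert (Hreq : forall t, 0 <= t <= T -> r_fun T kappa eta t = rr t) by (intros; apply r_eq; auto).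
  assert (HRR : RR = rr delta) by reflexivity.
  assert (Hrdec : forall t t', t <= t' -> rr t' <= rr t).
  { intros t t' H. destruct (Req_dec t t') as [->|]; [lra|]. left; apply rt_decr; auto; lra. }
  assert (HrT : rr T = 0) by apply rt_T.
  set (b := (Rmax a0 0 + delta) / 2).
  assert (Hmx1 : a0 <= Rmax a0 0) by apply Rmax_l. assert (Hmx2 : 0 <= Rmax a0 0) by apply Rmax_r.
  assert (Hmx3 : Rmax a0 0 < delta) by (unfold Rmax; destruct Rle_dec; lra).
  assert (Hb : 0 < b < delta) by (unfold b; lra).
  assert (Hba : a0 < b) by (unfold b; lra).
  set (F := fun t => psi (clamp 0 T t) - ((rr delta - rr t) + Rabs (rr delta - rr t)) / 2).
  assert (HFc : forall t, continuity_pt F t).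
  { intros t. unfold F. apply C_minus. apply cont_clamp; auto.
    apply (C_ext (fun t => / 2 * ((rr delta - rr t) + Rabs (rr delta - rr t)))). intros; field.
    apply C_scal. apply C_plus. apply C_minus. apply C_const. apply rt_cont; auto.
    apply (continuity_pt_comp (fun t => rr delta - rr t) Rabs). apply C_minus. apply C_const. apply rt_cont; auto.
    apply Rcontinuity_abs. }
  destruct (continuity_ab_min F b T ltac:(lra) (fun c _ => HFc c)) as [tm [Htm1 Htm2]].
  set (m0 := F tm).
  assert (Hm0 : 0 < m0).
  { unfold m0, F. rewrite clamp_id by lra.
    assert (H := Hpa tm ltac:(lra) ltac:(lra)). rewrite !Hreq in H by lra. rewrite Rmax0 in H. lra. }
  assert (Hpsib : forall t, b <= t <= T -> Rmax (RR - rr t) 0 + m0 <= psi t).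
  { intros t Ht. assert (H := Htm1 t Ht). unfold m0. unfold F in *.
    rewrite (clamp_id 0 T t) in H by lra. rewrite (clamp_id 0 T tm) in * by lra.
    rewrite Rmax0. rewrite HRR. lra. }
  set (gam := rr b - RR).
  assert (Hgam : 0 < gam) by (unfold gam; rewrite HRR; assert (H := rt_decr T kappa eta HT Heta b delta ltac:(lra)); unfold rr; lra).
  set (mu := Rmin (m0 / 2) (gam / 4)).
  assert (Hmu : 0 < mu) by (unfold mu; apply Rmin_pos; lra).
  destruct (nat_floor (RR / mu)) as [k [Hk1 Hk2]]. { left; apply Rdiv_lt_0_compat; lra. }
  set (n := (k + 2)%nat).
  assert (Hn : (2 <= n)%nat) by (unfold n; lia).
  assert (HINn : INR n = INR k + 2) by (unfold n; rewrite plus_INR; simpl; ring).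
  assert (Hq : RR * qn n <= mu).
  { unfold qn. rewrite HINn.
    assert (Hp : 0 < INR k + 2) by (assert (0 <= INR k) by apply pos_INR; lra).
    apply Rmult_le_reg_r with (INR k + 2); auto. rewrite Rmult_assoc, Rinv_l by lra.
    assert (RR <= mu * (RR / mu + 1)).
    { replace (mu * (RR / mu + 1)) with (RR + mu) by (field; lra). lra. }
    assert (mu * (RR / mu + 1) <= mu * (INR k + 2)) by (apply Rmult_le_compat_l; lra). lra. }
  assert (Hqm : RR * qn n <= m0 / 2) by (assert (mu <= m0/2) by apply Rmin_l; lra).
  assert (Hqg : RR * qn n <= gam / 4) by (assert (mu <= gam/4) by apply Rmin_r; lra).
  assert (Hqpos : 0 < qn n) by (apply qn_pos; auto).
  set (Nn := INR (2 * n + 1)).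
  assert (HNn : 0 < Nn) by (unfold Nn; apply lt_0_INR; lia).
  destruct (small_nu (RR * qn n ^ 2 / 4) (Nn / 2) (1 / RR)) as [nu1 [Hnu1 Hs1]].
  { assert (0 < qn n ^ 2) by (apply pow_lt; lra). apply Rdiv_lt_0_compat; [apply Rmult_lt_0_compat|]; lra. }
  { lra. } { apply Rdiv_lt_0_compat; lra. }
  destruct (small_nu (RR * qn n ^ 2 / 4) (2 * Nn) (qn n / 4)) as [nu2 [Hnu2 Hs2]].
  { assert (0 < qn n ^ 2) by (apply pow_lt; lra). apply Rdiv_lt_0_compat; [apply Rmult_lt_0_compat|]; lra. }
  { lra. } { lra. }
  destruct (small_nu (qn n * m0 / 2) (2 * Nn) eps) as [nu3 [Hnu3 Hs3]].
  { apply Rdiv_lt_0_compat; [apply Rmult_lt_0_compat|]; lra. } { lra. } { lra. }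
  destruct (small_nu (qn n * gam / 4) (2 * Nn) (eps / 2)) as [nu4 [Hnu4 Hs4]].
  { apply Rdiv_lt_0_compat; [apply Rmult_lt_0_compat|]; lra. } { lra. } { lra. }
  set (L0 := 2 * Nn / eps + 1).
  assert (HL0 : 0 < L0) by (unfold L0; assert (0 < 2 * Nn / eps) by (apply Rdiv_lt_0_compat; lra); lra).
  assert (HL0b : Nn * (2 * exp (- (2 * L0))) <= eps / 2).
  { assert (He : 2 * L0 <= exp (2 * L0)).
    { assert (1 + 2 * L0 < exp (2 * L0)) by (apply exp_ineq1; lra). lra. }
    rewrite exp_Ropp.
    assert (He2 : 0 < exp (2 * L0)) by apply exp_pos.
    apply Rle_trans with (Nn * (2 * / (2 * L0))).
    { apply Rmult_le_compat_l; [lra|]. apply Rmult_le_compat_l; [lra|]. apply Rinv_le_contravar; lra. }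
    replace (Nn * (2 * / (2 * L0))) with (Nn / L0) by (field; lra).
    apply Rmult_le_reg_r with L0; auto. unfold Rdiv. rewrite Rmult_assoc, Rinv_l by lra.
    unfold L0. replace (eps * / 2 * (2 * Nn / eps + 1)) with (Nn + eps / 2) by (field; lra). lra. }
  destruct (HLlim L0) as [dL [HdL HdLL]].
  set (d := Rmin (Rmin (Rmin nu1 nu2) (Rmin nu3 nu4)) dL).
  assert (Hd : 0 < d) by (unfold d; repeat apply Rmin_pos; lra).
  exists d. split; auto.
  intros s0 Hs0 Hs0d t x Ht Hx.
  assert (Hd1 : d <= Rmin (Rmin nu1 nu2) (Rmin nu3 nu4)) by apply Rmin_l.
  assert (Hd2 : d <= dL) by apply Rmin_r.
  assert (Hm1 : Rmin (Rmin nu1 nu2) (Rmin nu3 nu4) <= Rmin nu1 nu2) by apply Rmin_l.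
  assert (Hm2 : Rmin (Rmin nu1 nu2) (Rmin nu3 nu4) <= Rmin nu3 nu4) by apply Rmin_r.
  assert (Hm3 : Rmin nu1 nu2 <= nu1) by apply Rmin_l. assert (Hm4 : Rmin nu1 nu2 <= nu2) by apply Rmin_r.
  assert (Hm5 : Rmin nu3 nu4 <= nu3) by apply Rmin_l. assert (Hm6 : Rmin nu3 nu4 <= nu4) by apply Rmin_r.
  assert (Hnu := nuu_pos s0 Hs0).
  assert (Hnus : nuu s0 < s0) by (unfold nuu; simpl; nra).
  specialize (Hs1 (nuu s0) ltac:(lra)). specialize (Hs2 (nuu s0) ltac:(lra)).
  specialize (Hs3 (nuu s0) ltac:(lra)). specialize (Hs4 (nuu s0) ltac:(lra)).
  assert (HLs : L0 < L s0) by (apply HdLL; lra).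
  destruct (unpack T kappa delta eta HT Heta s0 (thetas s0) (Hthetas s0 Hs0)) as [B [dt [dx [dxx [HB Hu]]]]].
  set (th := thetas s0) in *.
  assert (HA1 : Nn * (1 / (2 * nuu s0)) * EA (nuu s0) RR n <= 1 / RR).
  { unfold EA. destruct Hs1 as [Hs1 _]. eapply Rle_trans; [|exact Hs1]. right. field. lra. }
  assert (HA2 : Nn * (2 * EA (nuu s0) RR n) <= qn n / 4).
  { unfold EA. destruct Hs2 as [_ Hs2]. eapply Rle_trans; [|exact Hs2]. right. ring. }
  assert (Hbar := th_le_bar T kappa delta eta HT Hdelta Heta s0 Hs0 th dt dx dxx B Hu n Hn HA1 HA2).
  assert (Hlow := th_gem1 T kappa delta eta HT Hdelta Heta s0 Hs0 th dt dx dxx B Hu).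
  assert (Hodd := odd_sol T kappa delta eta HT Hdelta Heta s0 Hs0 th dt dx dxx B Hu).
  assert (HLpos0 := HLpos s0 (proj1 Hs0)).
  assert (Hsl : 0 < s0 ^ 2 * L s0) by (apply Rmult_lt_0_compat; [apply pow_lt; lra|auto]).
  assert (Hpt : 0 <= psi t) by (apply Hpnn; auto).
  assert (Key : forall y, 0 < y -> s0 ^ 2 * L s0 + psi t <= y -> -1 <= th t y <= -1 + eps).
  { intros y Hy Hyb. split. apply Hlow; auto.
    eapply Rle_trans; [apply Hbar; auto; lra|]. unfold Bar. fold RR.
    destruct (Rle_dec b t) as [Htb|Htb].
    - assert (Hs : 0 <= rr t) by (rewrite <- HrT; apply Hrdec; lra).
      eapply Rle_trans; [apply (claimB (nuu s0) RR n Hnu HR Hn m0 (rr t) y Hqm Hm0 Hs)|].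
      + assert (H := Hpsib t ltac:(lra)). lra.
      + fold Nn. destruct Hs3 as [_ Hs3]. lra.
    - assert (Hs : RR + gam <= rr t) by (unfold gam; assert (rr b <= rr t) by (apply Hrdec; lra); lra).
      eapply Rle_trans; [apply (claimC (nuu s0) RR n Hnu Hn gam (rr t) y Hqg Hgam Hs); lra|].
      fold Nn.
      assert (Hey : exp (- y / nuu s0) <= exp (- (2 * L0))).
      { destruct (Req_dec (- y / nuu s0) (- (2 * L0))) as [E|E]; [rewrite E; lra|].
        left; apply exp_increasing.
        assert (y / nuu s0 > 2 * L0).
        { unfold nuu. assert (s0 ^ 2 * L0 < s0 ^ 2 * L s0) by (apply Rmult_lt_compat_l; [apply pow_lt|]; lra).
          assert (0 < s0 ^ 2) by (apply pow_lt; lra).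
          apply Rlt_gt. apply Rmult_lt_reg_r with (s0 ^ 2 / 2). lra.
          replace (y / (s0 ^ 2 / 2) * (s0 ^ 2 / 2)) with y by (field; lra). lra. }
        lra. }
      destruct Hs4 as [_ Hs4].
      assert (Nn * (2 * exp (- y / nuu s0)) <= eps / 2).
      { eapply Rle_trans; [|exact HL0b]. apply Rmult_le_compat_l; lra. }
      lra. }
  assert (Hent : theta_entropy T kappa delta eta t x = msign x).
  { apply (ent_eq T kappa delta eta psi t x (proj1 Hdelta) a0); auto. lra. }
  rewrite Hent. unfold msign.
  destruct (Rlt_dec 0 x) as [Hxp|Hxn].
  - rewrite Rabs_pos_eq in Hx by lra. assert (K := Key x Hxp Hx).
    apply Rabs_le. lra.
  - destruct (Rlt_dec x 0) as [Hxn'|Hx0].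
    + rewrite Rabs_left in Hx by lra. assert (K := Key (- x) ltac:(lra) Hx).
      rewrite Hodd in K by auto. apply Rabs_le. lra.
    + exfalso. assert (x = 0) by lra. subst. rewrite Rabs_R0 in Hx. lra.
Qed.
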